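(* The Only Upper Bounded Days On Days Off Scheduling Problem (UDODOSP) can be decided in $\mathcal{O}(D^2)$ time.
   Context: An instance of the Days On Days Off Scheduling Problem (DODOSP) consists of integers $D\ge 1$ (days), $N\ge 1$ (workers), bounds $l_w,u_w,l_o,u_o,U_w,U_o\in\mathbb{N}$, and for each day $d\in\{1,\dots,D\}$ integers $0\le r_l^d\le r_u^d\le N$. A schedule is a map $f:\{n_1,\dots,n_N\}\times\{1,\dots,D\}\to\{\mathrm{ON},\mathrm{OFF}\}$ (not cyclic). A work period (resp. off period) of a worker is an inclusion-wise maximal set of consecutive days on which the worker is ON (resp. OFF). A schedule is feasible if on every day $d$ the number of workers that are ON lies in $[r_l^d,r_u^d]$, every work period has length between $l_w$ and $u_w$, every off period has length between $l_o$ and $u_o$, every worker is ON on at most $U_w$ days and OFF on at most $U_o$ days. The decision problem asks whether a feasible schedule exists. The UDODOSP is the DODOSP restricted to instances with $l_w=l_o=1$. *)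

(* Defs.v *)
From Stdlib Require Import Arith List Bool.
Import ListNotations.

Record dodosp_instance := {
  D : nat;  N : nat;
  l_w : nat; u_w : nat; l_o : nat; u_o : nat; U_w : nat; U_o : nat;
  r_l : nat -> nat;  (* lower bound on #workers ON, day d (1 <= d <= D) *)
  r_u : nat -> nat   (* upper bound on #workers ON, day d (1 <= d <= D) *)
}.

Definition valid_instance (I : dodosp_instance) : Prop :=
  1 <= D I /\ 1 <= N I /\
  forall d, 1 <= d <= D I -> r_l I d <= r_u I d /\ r_u I d <= N I.

Definition udodosp_instance (I : dodosp_instance) : Prop :=
  valid_instance I /\ l_w I = 1 /\ l_o I = 1.

(** A schedule: [f i d = true] means worker [i] (0 <= i < N) is ON on day
    [d] (1 <= d <= D); values outside this range are irrelevant. *)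
Definition schedule := nat -> nat -> bool.

Definition num_on (I : dodosp_instance) (f : schedule) (d : nat) : nat :=
  length (filter (fun i => f i d) (seq 0 (N I))).

Definition periods_ok (I : dodosp_instance) (f : schedule) (i : nat)
    (s : bool) (lo hi : nat) : Prop :=
  forall a b, 1 <= a -> a <= b -> b <= D I ->
    (forall x, a <= x <= b -> f i x = s) ->
    (a = 1 \/ f i (a - 1) <> s) ->
    (b = D I \/ f i (b + 1) <> s) ->
    lo <= b - a + 1 <= hi.

Definition feasible_schedule (I : dodosp_instance) (f : schedule) : Prop :=
  (forall d, 1 <= d <= D I -> r_l I d <= num_on I f d <= r_u I d) /\
  (forall i, i < N I ->
     periods_ok I f i true (l_w I) (u_w I) /\
     periods_ok I f i false (l_o I) (u_o I) /\
     length (filter (fun d => f i d) (seq 1 (D I))) <= U_w I /\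
     length (filter (fun d => negb (f i d)) (seq 1 (D I))) <= U_o I).

Definition feasible (I : dodosp_instance) : Prop :=
  exists f : schedule, feasible_schedule I f.

(** * A unit-cost RAM (natural-number registers, indirect addressing,
      addition, truncated subtraction, zero test; every instruction costs 1). *)
Inductive instr :=
| IConst (r n : nat)
| IAdd (r a b : nat)
| ISub (r a b : nat)        (* m[r] := m[a] - m[b] (truncated) *)
| ILoad (r a : nat)
| IStore (a b : nat)
| IJz (a l : nat)
| IJmp (l : nat)
| IHalt.

Definition program := list instr.
Definition memory := nat -> nat.
Definition state := (nat * memory)%type.

Definition upd (m : memory) (r v : nat) : memory :=
  fun x => if Nat.eqb x r then v else m x.

Definition step (P : program) (s : state) : option state :=
  let (pc, m) := s in
  match nth_error P pc with
  | None | Some IHalt => None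
  | Some (IConst r n) => Some (S pc, upd m r n)
  | Some (IAdd r a b) => Some (S pc, upd m r (m a + m b))
  | Some (ISub r a b) => Some (S pc, upd m r (m a - m b))
  | Some (ILoad r a) => Some (S pc, upd m r (m (m a)))
  | Some (IStore a b) => Some (S pc, upd m (m a) (m b))
  | Some (IJz a l) => Some (if Nat.eqb (m a) 0 then l else S pc, m)
  | Some (IJmp l) => Some (l, m)
  end.

(** [run P t s = Some m] iff the machine started in [s] halts after at most
    [t] executed instructions, with final memory [m]. *)
Fixpoint run (P : program) (t : nat) (s : state) : option memory :=
  match step P s with
  | None => Some (snd s)
  | Some s' => match t with 0 => None | S t' => run P t' s' end
  end.

(** Input encoding: m[0..7] = D, N, l_w, u_w, l_o, u_o, U_w, U_o;
    m[10 + 2d] = r_l^d and m[11 + 2d] = r_u^d for 1 <= d <= D;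
    all other cells 0. *)
Definition init_mem (I : dodosp_instance) : memory := fun x =>
  match x with
  | 0 => D I | 1 => N I | 2 => l_w I | 3 => u_w I
  | 4 => l_o I | 5 => u_o I | 6 => U_w I | 7 => U_o I
  | _ => if (12 <=? x) && (x <=? 11 + 2 * D I) then
           (if Nat.even x then r_l I ((x - 10) / 2) else r_u I ((x - 11) / 2))
         else 0
  end.

Definition accepts (m : memory) : Prop := m 0 <> 0.

(* Main.v *)
Require Import Defs.
From Stdlib Require Import Arith List Lia Bool ClassicalEpsilon.
Import ListNotations.

Fixpoint csum (g : nat -> nat) (a n : nat) : nat :=
  match n with 0 => 0 | S n => csum g a n + g (a + n) end.

Lemma csum_ext g h a n : (forall k, a <= k < a + n -> g k = h k) -> csum g a n = csum h a n.
Proof. induction n; simpl; intros H; auto. rewrite IHn by (intros; apply H; lia). rewrite H by lia. auto. Qed.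

Lemma csum_add g h a n : csum (fun k => g k + h k) a n = csum g a n + csum h a n.
Proof. induction n; simpl; lia. Qed.

Lemma csum_sub g h a n : (forall k, h k <= g k) -> csum (fun k => g k - h k) a n = csum g a n - csum h a n.
Proof. intros H. induction n; simpl; auto.
  assert (csum h a n <= csum g a n). { clear IHn. induction n; simpl; auto. specialize (H (a+n)). lia. }
  specialize (H (a+n)). lia. Qed.

Lemma csum_le g h a n : (forall k, a <= k < a + n -> g k <= h k) -> csum g a n <= csum h a n.
Proof. induction n; simpl; intros H; auto. assert (g (a+n) <= h (a+n)) by (apply H; lia).
  assert (csum g a n <= csum h a n) by (apply IHn; intros; apply H; lia). lia. Qed.

Lemma csum_const c a n : csum (fun _ => c) a n = n * c.
Proof. induction n; simpl; lia. Qed.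

Lemma csum_swap (b : nat -> nat -> nat) a n a' n' :
  csum (fun d => csum (fun i => b i d) a' n') a n = csum (fun i => csum (fun d => b i d) a n) a' n'.
Proof. induction n; simpl.
  - rewrite (csum_const 0). lia.
  - rewrite IHn. rewrite <- csum_add. reflexivity. Qed.

Lemma csum_split g a n m : csum g a (n + m) = csum g a n + csum g (a + n) m.
Proof. induction m; simpl. rewrite Nat.add_0_r; lia. rewrite Nat.add_succ_r. simpl. rewrite IHm. rewrite Nat.add_assoc. lia. Qed.

Definition ind (b : bool) : nat := if b then 1 else 0.

Lemma len_filter_seq (p : nat -> bool) a n : length (filter p (seq a n)) = csum (fun k => ind (p k)) a n.
Proof. induction n; [reflexivity|]. rewrite seq_S, filter_app, length_app, IHn. simpl.
  unfold ind; destruct (p (a+n)); simpl; lia. Qed.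

Lemma csum_ind_le p a n : csum (fun k => ind (p k)) a n <= n.
Proof. induction n; simpl; auto. unfold ind at 2; destruct (p (a+n)); lia. Qed.

Lemma csum_ind_full p a n : csum (fun k => ind (p k)) a n = n -> forall k, a <= k < a + n -> p k = true.
Proof. induction n; simpl; intros H k Hk. lia.
  pose proof (csum_ind_le p a n).
  unfold ind at 2 in H. destruct (p (a+n)) eqn:E.
  - destruct (Nat.eq_dec k (a+n)). subst; auto. apply IHn; lia.
  - lia. Qed.

Lemma csum_ind_zero p a n : csum (fun k => ind (p k)) a n = 0 -> forall k, a <= k < a + n -> p k = false.
Proof. induction n; simpl; intros H k Hk. lia.
  unfold ind at 2 in H. destruct (p (a+n)) eqn:E. lia.
  destruct (Nat.eq_dec k (a+n)). subst; auto. apply IHn; lia. Qed.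

Lemma csum_indicator i n : i < n -> csum (fun k => ind (Nat.eqb k i)) 0 n = 1.
Proof. induction n; intros H. lia. simpl.
  destruct (Nat.eq_dec i n).
  - subst. rewrite Nat.eqb_refl. simpl.
    assert (csum (fun k => ind (k =? n)) 0 n = 0).
    { rewrite (csum_ext _ (fun _ => 0)). rewrite csum_const. lia.
      intros k Hk. destruct (Nat.eqb_spec k n); simpl; lia. }
    rewrite H0. reflexivity.
  - rewrite IHn by lia. destruct (Nat.eqb_spec n i); simpl; [lia|]. unfold ind. lia. Qed.

Definition cnt (N i x : nat) : nat := csum (fun k => ind (Nat.eqb (k mod N) i)) 0 x.

Lemma cnt_S N i x : cnt N i (S x) = cnt N i x + ind (Nat.eqb (x mod N) i).
Proof. reflexivity. Qed.

Lemma cnt_plusN N i x : 0 < N -> i < N -> cnt N i (x + N) = cnt N i x + 1.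
Proof. intros HN Hi. induction x.
  - simpl. unfold cnt. rewrite (csum_ext _ (fun k => ind (Nat.eqb k i))).
    apply csum_indicator; auto. intros k Hk. rewrite Nat.mod_small by lia. auto.
  - replace (S x + N) with (S (x + N)) by lia. rewrite !cnt_S, IHx.
    replace ((x + N) mod N) with (x mod N). lia.
    replace (x + N) with (x + 1 * N) by lia. rewrite Nat.Div0.mod_add. auto. Qed.

Lemma cnt_mono N i x k : cnt N i x <= cnt N i (x + k).
Proof. induction k. rewrite Nat.add_0_r; lia. rewrite Nat.add_succ_r, cnt_S. lia. Qed.

Lemma cnt_mono' N i x y : x <= y -> cnt N i x <= cnt N i y.
Proof. intros H. replace y with (x + (y - x)) by lia. apply cnt_mono. Qed.

Lemma cnt_le_mult N i x y B : 0 < N -> i < N -> x <= y -> y <= x + B * N -> cnt N i y <= cnt N i x + B.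
Proof. intros HN Hi. revert x y. induction B; intros x y H1 H2.
  - replace y with x by lia. lia.
  - destruct (le_lt_dec y (x + N)).
    pose proof (cnt_mono' N i y (x+N) l). rewrite cnt_plusN in H; auto. lia.
    assert (cnt N i y <= cnt N i (x + N) + B) by (apply IHB; simpl in *; lia).
    rewrite cnt_plusN in H; auto. lia. Qed.

Lemma cnt_ge_mult N i x y A : 0 < N -> i < N -> x + A * N <= y -> cnt N i x + A <= cnt N i y.
Proof. intros HN Hi. revert x y. induction A; intros x y H.
  - rewrite Nat.add_0_r. apply cnt_mono'. lia.
  - assert (cnt N i (x + N) + A <= cnt N i y) by (apply IHA; simpl in *; lia).
    rewrite cnt_plusN in H0; auto. lia. Qed.

Lemma cnt_sum N x : 0 < N -> csum (fun i => cnt N i x) 0 N = x.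
Proof. intros HN. induction x. simpl. rewrite (csum_ext _ (fun _ => 0)) by auto. rewrite csum_const; lia.
  rewrite (csum_ext _ (fun i => cnt N i x + ind (Nat.eqb i (x mod N)))).
  rewrite csum_add, IHx, csum_indicator. lia. apply Nat.mod_upper_bound; lia.
  intros k Hk. rewrite cnt_S. rewrite Nat.eqb_sym. auto. Qed.

Record edge := mkE { es : nat; ed : nat; ep : bool; ewt : nat }.

Definition NUW I := Nat.min (u_w I) (D I) * N I.
Definition NA I := (D I - U_o I) * N I.
Definition NB I := Nat.min (U_w I) (D I) * N I.
Definition CW I := D I - u_w I.
Definition SW I := u_w I + 1.
Definition CO I := D I - u_o I.
Definition SO I := u_o I + 1.

Fixpoint e1 I d k : list edge := match k with 0 => [] | S k =>
  mkE (d-1) d true (r_l I d) :: mkE d (d-1) false (r_u I d) :: e1 I (S d) k end.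
Fixpoint ewl I j k : list edge := match k with 0 => [] | S k =>
  mkE (j + SW I) j false (NUW I) :: ewl I (S j) k end.
Fixpoint eol I j k : list edge := match k with 0 => [] | S k =>
  mkE j (j + SO I) true (N I) :: eol I (S j) k end.
Definition edges I := e1 I 1 (D I) ++ ewl I 0 (CW I) ++ eol I 0 (CO I) ++
  [mkE 0 (D I) true (NA I); mkE (D I) 0 false (NB I)].

Definition sat (e : edge) (y : nat -> nat) : Prop :=
  if ep e then y (es e) + ewt e <= y (ed e) else y (es e) <= y (ed e) + ewt e.
Definition sol I y := forall e, In e (edges I) -> sat e y.

Lemma In_e1 I d0 k d : d0 <= d < d0 + k ->
  In (mkE (d-1) d true (r_l I d)) (e1 I d0 k) /\ In (mkE d (d-1) false (r_u I d)) (e1 I d0 k).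
Proof. revert d0; induction k; intros d0 H; simpl. lia.
  destruct (Nat.eq_dec d d0). subst; auto.
  destruct (IHk (S d0)) as [H1 H2]. lia. auto. Qed.
Lemma In_ewl I j0 k j : j0 <= j < j0 + k -> In (mkE (j + SW I) j false (NUW I)) (ewl I j0 k).
Proof. revert j0; induction k; intros j0 H; simpl. lia.
  destruct (Nat.eq_dec j j0). subst; auto. right; apply IHk; lia. Qed.
Lemma In_eol I j0 k j : j0 <= j < j0 + k -> In (mkE j (j + SO I) true (N I)) (eol I j0 k).
Proof. revert j0; induction k; intros j0 H; simpl. lia.
  destruct (Nat.eq_dec j j0). subst; auto. right; apply IHk; lia. Qed.

Lemma e1_inv I d0 k e : In e (e1 I d0 k) -> exists d, d0 <= d < d0 + k /\
  (e = mkE (d-1) d true (r_l I d) \/ e = mkE d (d-1) false (r_u I d)).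
Proof. revert d0; induction k; intros d0 H; simpl in H. contradiction.
  destruct H as [H|[H|H]]. exists d0; split; auto; lia. exists d0; split; auto; lia.
  destruct (IHk _ H) as [d [? ?]]. exists d; split; auto; lia. Qed.
Lemma ewl_inv I j0 k e : In e (ewl I j0 k) -> exists j, j0 <= j < j0 + k /\ e = mkE (j + SW I) j false (NUW I).
Proof. revert j0; induction k; intros j0 H; simpl in H. contradiction.
  destruct H as [H|H]. exists j0; split; auto; lia.
  destruct (IHk _ H) as [d [? ?]]. exists d; split; auto; lia. Qed.
Lemma eol_inv I j0 k e : In e (eol I j0 k) -> exists j, j0 <= j < j0 + k /\ e = mkE j (j + SO I) true (N I).
Proof. revert j0; induction k; intros j0 H; simpl in H. contradiction.
  destruct H as [H|H]. exists j0; split; auto; lia.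
  destruct (IHk _ H) as [d [? ?]]. exists d; split; auto; lia. Qed.

Definition sys I (y : nat -> nat) : Prop :=
  (forall d, 1 <= d <= D I -> y (d-1) + r_l I d <= y d /\ y d <= y (d-1) + r_u I d) /\
  (forall j, j + u_w I + 1 <= D I -> y (j + u_w I + 1) <= y j + NUW I) /\
  (forall j, j + u_o I + 1 <= D I -> y j + N I <= y (j + u_o I + 1)) /\
  y 0 + NA I <= y (D I) /\ y (D I) <= y 0 + NB I.

Lemma sol_sys I y : sol I y <-> sys I y.
Proof. unfold sol, edges, sys. split.
  - intros H. split; [|split; [|split; [|split]]].
    + intros d Hd. destruct (In_e1 I 1 (D I) d) as [H1 H2]. lia.
      pose proof (H _ (in_or_app _ _ _ (or_introl H1))). pose proof (H _ (in_or_app _ _ _ (or_introl H2))). unfold sat in *; simpl in *. lia.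
    + intros j Hj. assert (HH := In_ewl I 0 (CW I) j). unfold CW, SW in *.
      specialize (H _ (in_or_app _ _ _ (or_intror (in_or_app _ _ _ (or_introl (HH ltac:(lia))))))).
      unfold sat in H; simpl in H. replace (j + u_w I + 1) with (j + (u_w I + 1)) by lia. lia.
    + intros j Hj. assert (HH := In_eol I 0 (CO I) j). unfold CO, SO in *.
      specialize (H _ (in_or_app _ _ _ (or_intror (in_or_app _ _ _ (or_intror (in_or_app _ _ _ (or_introl (HH ltac:(lia))))))))).
      unfold sat in H; simpl in H. replace (j + u_o I + 1) with (j + (u_o I + 1)) by lia. lia.
    + specialize (H (mkE 0 (D I) true (NA I))). unfold sat in H; simpl in H.
      apply H. repeat (apply in_or_app; right). simpl; auto.
    + specialize (H (mkE (D I) 0 false (NB I))). unfold sat in H; simpl in H.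
      apply H. repeat (apply in_or_app; right). simpl; auto.
  - intros [H1 [H2 [H3 [H4 H5]]]] e He.
    apply in_app_or in He as [He|He].
    { destruct (e1_inv _ _ _ _ He) as [d [Hd [-> | ->]]]; unfold sat; simpl; specialize (H1 d ltac:(lia)); lia. }
    apply in_app_or in He as [He|He].
    { destruct (ewl_inv _ _ _ _ He) as [j [Hj ->]]; unfold sat, SW, CW in *; simpl.
      specialize (H2 j ltac:(lia)). replace (j + (u_w I + 1)) with (j + u_w I + 1) by lia. lia. }
    apply in_app_or in He as [He|He].
    { destruct (eol_inv _ _ _ _ He) as [j [Hj ->]]; unfold sat, SO, CO in *; simpl.
      specialize (H3 j ltac:(lia)). replace (j + (u_o I + 1)) with (j + u_o I + 1) by lia. lia. }
    simpl in He. destruct He as [<-|[<-|[]]]; unfold sat; simpl; lia.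
Qed.

Lemma csum_all_true p a n : (forall k, a <= k < a + n -> p k = true) -> csum (fun k => ind (p k)) a n = n.
Proof. intros H. rewrite (csum_ext _ (fun _ => 1)). rewrite csum_const; lia.
  intros k Hk; rewrite H; auto. Qed.
Lemma csum_all_false p a n : (forall k, a <= k < a + n -> p k = false) -> csum (fun k => ind (p k)) a n = 0.
Proof. intros H. rewrite (csum_ext _ (fun _ => 0)). rewrite csum_const; lia.
  intros k Hk; rewrite H; auto. Qed.
Lemma csum_ind_neg p a n : csum (fun k => ind (p k)) a n + csum (fun k => ind (negb (p k))) a n = n.
Proof. induction n; simpl; auto. unfold ind at 2 4. destruct (p (a+n)); simpl; lia. Qed.

Lemma sys_mono I y : sys I y -> forall p q, p <= q <= D I -> y p <= y q.
Proof. intros [H1 _] p q. induction q; intros H. replace p with 0 by lia; lia.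
  destruct (Nat.eq_dec p (S q)). subst; lia.
  specialize (H1 (S q) ltac:(lia)). simpl in H1. rewrite Nat.sub_0_r in H1. specialize (IHq ltac:(lia)). lia. Qed.

Definition sched (I : dodosp_instance) (y : nat -> nat) : schedule :=
  fun i d => Nat.ltb (cnt (N I) i (y (d-1))) (cnt (N I) i (y d)).

Lemma sched_ind I y i d : udodosp_instance I -> sys I y -> i < N I -> 1 <= d <= D I ->
  ind (sched I y i d) = cnt (N I) i (y d) - cnt (N I) i (y (d-1)).
Proof. intros [[HD [HN Hr]] _] Hs Hi Hd.
  pose proof Hs as [H1 _]. specialize (H1 d Hd). specialize (Hr d Hd).
  assert (cnt (N I) i (y d) <= cnt (N I) i (y (d-1)) + 1) by (apply cnt_le_mult; lia).
  assert (cnt (N I) i (y (d-1)) <= cnt (N I) i (y d)) by (apply cnt_mono'; lia).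
  unfold sched, ind. destruct (Nat.ltb_spec (cnt (N I) i (y (d - 1))) (cnt (N I) i (y d))); lia. Qed.

Lemma sched_window I y i a0 n : udodosp_instance I -> sys I y -> i < N I -> a0 + n <= D I ->
  csum (fun d => ind (sched I y i d)) (a0 + 1) n = cnt (N I) i (y (a0 + n)) - cnt (N I) i (y a0).
Proof. intros HI Hs Hi. induction n; intros Hn. simpl. rewrite Nat.add_0_r; lia.
  simpl. rewrite IHn by lia. rewrite sched_ind by (auto; lia).
  replace (a0 + 1 + n - 1) with (a0 + n) by lia. replace (a0 + 1 + n) with (a0 + S n) by lia.
  assert (cnt (N I) i (y a0) <= cnt (N I) i (y (a0 + n))) by (apply cnt_mono', (sys_mono I y Hs); lia).
  assert (cnt (N I) i (y (a0+n)) <= cnt (N I) i (y (a0 + S n))) by (apply cnt_mono', (sys_mono I y Hs); lia).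
  lia. Qed.

Theorem sys_feasible I y : udodosp_instance I -> sys I y -> feasible I.
Proof. intros HI Hs. pose proof HI as [[HD [HN Hr]] [Hlw Hlo]].
  exists (sched I y). split.
  - intros d Hd. unfold num_on. rewrite len_filter_seq.
    rewrite (csum_ext _ (fun i => cnt (N I) i (y d) - cnt (N I) i (y (d-1)))).
    2:{ intros k Hk. apply sched_ind; auto; lia. }
    rewrite csum_sub by (intros; apply cnt_mono', (sys_mono I y Hs); lia).
    rewrite !cnt_sum by lia. pose proof Hs as [H1 _]. specialize (H1 d Hd). lia.
  - intros i Hi. split; [|split; [|split]].
    + intros a b Ha Hab Hb Hon _ _. rewrite Hlw. split. lia.
      destruct (le_lt_dec (b - a + 1) (u_w I)) as [|Hlt]; auto. exfalso.
      pose proof (sched_window I y i (a-1) (u_w I + 1) HI Hs Hi ltac:(lia)) as W.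
      rewrite csum_all_true in W by (intros; apply Hon; lia).
      pose proof Hs as [_ [H2 _]]. specialize (H2 (a-1) ltac:(lia)). unfold NUW in H2.
      replace (Nat.min (u_w I) (D I)) with (u_w I) in H2 by lia.
      replace (a - 1 + u_w I + 1) with (a - 1 + (u_w I + 1)) in H2 by lia.
      assert (cnt (N I) i (y (a - 1 + (u_w I + 1))) <= cnt (N I) i (y (a-1)) + u_w I).
      { apply cnt_le_mult; try lia. apply (sys_mono I y); [exact Hs|lia]. }
      lia.
    + intros a b Ha Hab Hb Hoff _ _. rewrite Hlo. split. lia.
      destruct (le_lt_dec (b - a + 1) (u_o I)) as [|Hlt]; auto. exfalso.
      pose proof (sched_window I y i (a-1) (u_o I + 1) HI Hs Hi ltac:(lia)) as W.
      rewrite csum_all_false in W by (intros; apply Hoff; lia).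
      pose proof Hs as [_ [_ [H3 _]]]. specialize (H3 (a-1) ltac:(lia)).
      replace (a - 1 + u_o I + 1) with (a - 1 + (u_o I + 1)) in H3 by lia.
      assert (cnt (N I) i (y (a-1)) + 1 <= cnt (N I) i (y (a - 1 + (u_o I + 1)))).
      { apply cnt_ge_mult; lia. }
      lia.
    + rewrite len_filter_seq. pose proof (sched_window I y i 0 (D I) HI Hs Hi ltac:(lia)) as W.
      simpl in W. rewrite W. pose proof Hs as [_ [_ [_ [_ H5]]]]. unfold NB in H5.
      assert (cnt (N I) i (y (D I)) <= cnt (N I) i (y 0) + Nat.min (U_w I) (D I)).
      { apply cnt_le_mult; try lia. apply (sys_mono I y); [exact Hs|lia]. }
      lia.
    + rewrite len_filter_seq. pose proof (csum_ind_neg (fun d => sched I y i d) 1 (D I)) as Hn.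
      pose proof (sched_window I y i 0 (D I) HI Hs Hi ltac:(lia)) as W. simpl in W.
      pose proof Hs as [_ [_ [_ [H4 _]]]]. unfold NA in H4.
      assert (cnt (N I) i (y 0) + (D I - U_o I) <= cnt (N I) i (y (D I))).
      { apply cnt_ge_mult; lia. }
      lia.
Qed.

Lemma ext_left (h : nat -> bool) s q : forall p, 1 <= p -> (forall x, p <= x <= q -> h x = s) ->
  exists a, 1 <= a <= p /\ (forall x, a <= x <= q -> h x = s) /\ (a = 1 \/ h (a-1) <> s).
Proof. induction p; intros Hp H. lia.
  destruct (Nat.eq_dec p 0). subst. exists 1. split; [lia|split; auto].
  destruct (Bool.bool_dec (h p) s).
  - destruct (IHp ltac:(lia)) as [a [Ha [Ha2 Ha3]]].
    { intros x Hx. destruct (Nat.eq_dec x p). subst; auto. apply H; lia. }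
    exists a; split; [lia|auto].
  - exists (S p). split; [lia|split; auto]. right. simpl. rewrite Nat.sub_0_r. auto. Qed.

Lemma ext_right (h : nat -> bool) s p Dd : forall k q, Dd - q = k -> q <= Dd -> (forall x, p <= x <= q -> h x = s) ->
  exists b, q <= b <= Dd /\ (forall x, p <= x <= b -> h x = s) /\ (b = Dd \/ h (b+1) <> s).
Proof. induction k; intros q Hk Hq H.
  - exists q. split; [lia|split; auto]. left; lia.
  - destruct (Bool.bool_dec (h (q+1)) s).
    + destruct (IHk (q+1) ltac:(lia) ltac:(lia)) as [b [Hb [Hb2 Hb3]]].
      { intros x Hx. destruct (Nat.eq_dec x (q+1)). subst; auto. apply H; lia. }
      exists b; split; [lia|auto].
    + exists q. split; [lia|split; auto]. Qed.

Lemma window_contra I f i s lo hi p : periods_ok I f i s lo hi -> 1 <= p -> p + hi <= D I ->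
  (forall x, p <= x <= p + hi -> f i x = s) -> False.
Proof. intros Hp H1 H2 H.
  destruct (ext_left (f i) s (p+hi) p H1 H) as [a [Ha [Ha2 Ha3]]].
  destruct (ext_right (f i) s a (D I) _ (p+hi) eq_refl H2 Ha2) as [b [Hb [Hb2 Hb3]]].
  specialize (Hp a b ltac:(lia) ltac:(lia) ltac:(lia) Hb2 Ha3 Hb3). lia. Qed.

Definition ysum I f d := csum (num_on I f) 1 d.

Lemma num_on_csum I f d : num_on I f d = csum (fun i => ind (f i d)) 0 (N I).
Proof. unfold num_on. apply len_filter_seq. Qed.

Theorem feasible_sys I : udodosp_instance I -> feasible I -> exists y, sys I y.
Proof. intros HI [f [Hday Hwork]]. pose proof HI as [[HD [HN Hr]] [Hlw Hlo]].
  exists (ysum I f). unfold sys, ysum.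
  assert (Hwin : forall j n, csum (num_on I f) 1 (j + n) = csum (num_on I f) 1 j + csum (fun i => csum (fun d => ind (f i d)) (j+1) n) 0 (N I)).
  { intros j n. rewrite csum_split. rewrite <- csum_swap. f_equal. replace (1 + j) with (j+1) by lia.
    apply csum_ext. intros; apply num_on_csum. }
  split; [|split; [|split; [|split]]].
  - intros d Hd. assert (csum (num_on I f) 1 d = csum (num_on I f) 1 (d-1) + num_on I f d) as ->.
    { destruct d. lia. simpl. rewrite Nat.sub_0_r. auto. }
    specialize (Hday d Hd). lia.
  - intros j Hj. rewrite <- Nat.add_assoc, Hwin. unfold NUW.
    replace (Nat.min (u_w I) (D I)) with (u_w I) by lia.
    enough (csum (fun i => csum (fun d => ind (f i d)) (j + 1) (u_w I + 1)) 0 (N I) <= csum (fun _ => u_w I) 0 (N I)) by (rewrite csum_const in H; lia).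
    apply csum_le. intros i Hi. pose proof (csum_ind_le (f i) (j+1) (u_w I + 1)).
    destruct (Nat.eq_dec (csum (fun d => ind (f i d)) (j + 1) (u_w I + 1)) (u_w I + 1)) as [E|]; [|lia].
    exfalso. pose proof (csum_ind_full _ _ _ E) as F.
    apply (window_contra I f i true (l_w I) (u_w I) (j+1)). apply (Hwork i ltac:(lia)). lia. lia.
    intros; apply F; lia.
  - intros j Hj. rewrite <- Nat.add_assoc, Hwin.
    enough (csum (fun _ => 1) 0 (N I) <= csum (fun i => csum (fun d => ind (f i d)) (j + 1) (u_o I + 1)) 0 (N I)) by (rewrite csum_const in H; lia).
    apply csum_le. intros i Hi.
    destruct (Nat.eq_dec (csum (fun d => ind (f i d)) (j + 1) (u_o I + 1)) 0) as [E|]; [|lia].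
    exfalso. pose proof (csum_ind_zero _ _ _ E) as F.
    apply (window_contra I f i false (l_o I) (u_o I) (j+1)). apply (Hwork i ltac:(lia)). lia. lia.
    intros; apply F; lia.
  - simpl. pose proof (Hwin 0 (D I)) as W. simpl in W. rewrite W. unfold NA.
    enough (csum (fun _ => D I - U_o I) 0 (N I) <= csum (fun i => csum (fun d => ind (f i d)) 1 (D I)) 0 (N I)) by (rewrite csum_const in H; lia).
    apply csum_le. intros i Hi. destruct (Hwork i ltac:(lia)) as [_ [_ [_ H4]]].
    rewrite len_filter_seq in H4. pose proof (csum_ind_neg (f i) 1 (D I)). lia.
  - simpl. pose proof (Hwin 0 (D I)) as W. simpl in W. rewrite W. unfold NB.
    enough (csum (fun i => csum (fun d => ind (f i d)) 1 (D I)) 0 (N I) <= csum (fun _ => Nat.min (U_w I) (D I)) 0 (N I)) by (rewrite csum_const in H; lia).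
    apply csum_le. intros i Hi. destruct (Hwork i ltac:(lia)) as [_ [_ [H3 _]]].
    rewrite len_filter_seq in H3. pose proof (csum_ind_le (f i) 1 (D I)). lia.
Qed.

Theorem feasible_iff I : udodosp_instance I -> (feasible I <-> exists y, sol I y).
Proof. intros HI. split.
  - intros H. destruct (feasible_sys I HI H) as [y Hy]. exists y. apply sol_sys; auto.
  - intros [y Hy]. apply (sys_feasible I y HI). apply sol_sys; auto. Qed.

Definition val (e : edge) (xu : nat) : nat := if ep e then xu + ewt e else xu - ewt e.

Definition relax (st : (nat -> nat) * bool) (e : edge) : (nat -> nat) * bool :=
  let (x, fl) := st in
  if Nat.ltb (x (ed e)) (val e (x (es e))) then (upd x (ed e) (val e (x (es e))), true) else (x, fl).

Definition round (E : list edge) st := fold_left relax E st.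

Fixpoint iterR E k x := match k with 0 => x | S k => iterR E k (fst (round E (x, false))) end.
Fixpoint rloop E k (st : (nat -> nat) * bool) := match k with 0 => st | S k => rloop E k (round E (fst st, false)) end.

Lemma val_mono e a b : a <= b -> val e a <= val e b.
Proof. unfold val; destruct (ep e); lia. Qed.

Lemma sat_val e y : sat e y <-> val e (y (es e)) <= y (ed e).
Proof. unfold sat, val; destruct (ep e); lia. Qed.

Lemma upd_eq' (m : nat -> nat) r v : upd m r v r = v.
Proof. unfold upd. rewrite Nat.eqb_refl. auto. Qed.
Lemma upd_neq' (m : nat -> nat) r v x : x <> r -> upd m r v x = m x.
Proof. intros H. unfold upd. destruct (Nat.eqb_spec x r); auto. contradiction. Qed.

Lemma relax_mono st e v : fst st v <= fst (relax st e) v.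
Proof. destruct st as [x fl]; simpl. destruct (Nat.ltb_spec (x (ed e)) (val e (x (es e)))); simpl; auto.
  unfold upd. destruct (Nat.eqb_spec v (ed e)); subst; lia. Qed.

Lemma round_mono E : forall st v, fst st v <= fst (round E st) v.
Proof. induction E; intros st v; simpl; auto. eapply Nat.le_trans; [apply (relax_mono st a v)|]. apply IHE. Qed.

Lemma relax_edge st e : val e (fst st (es e)) <= fst (relax st e) (ed e).
Proof. destruct st as [x fl]; simpl. destruct (Nat.ltb_spec (x (ed e)) (val e (x (es e)))); simpl.
  rewrite upd_eq'. auto. lia. Qed.

Lemma round_edge E : forall st e, In e E -> val e (fst st (es e)) <= fst (round E st) (ed e).
Proof. induction E; intros st e H; simpl in *. contradiction. destruct H as [<-|H].
  - eapply Nat.le_trans; [apply relax_edge|]. apply round_mono.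
  - eapply Nat.le_trans; [|apply IHE; eauto]. apply val_mono. apply relax_mono. Qed.

Lemma round_upper E z : (forall e, In e E -> sat e z) -> forall st, (forall v, fst st v <= z v) -> forall v, fst (round E st) v <= z v.
Proof. intros Hz. induction E; intros st H v; simpl; auto. apply IHE. intros e He; apply Hz; simpl; auto.
  intros w. destruct st as [x fl]; simpl. destruct (Nat.ltb_spec (x (ed a)) (val a (x (es a)))); simpl; auto.
  unfold upd. destruct (Nat.eqb_spec w (ed a)); subst; auto.
  assert (sat a z) by (apply Hz; simpl; auto). apply sat_val in H1.
  eapply Nat.le_trans; [|apply H1]. apply val_mono; auto. Qed.

Lemma round_noflag E : forall x fl, snd (round E (x, fl)) = false ->
  fl = false /\ fst (round E (x, fl)) = x /\ forall e, In e E -> val e (x (es e)) <= x (ed e).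
Proof. induction E; intros x fl H; simpl in *. subst; auto. split; auto. split; auto. intros; contradiction.
  destruct (Nat.ltb_spec (x (ed a)) (val a (x (es a)))).
  - apply IHE in H. destruct H; discriminate.
  - apply IHE in H. destruct H as [-> [H1 H2]]. split; auto. split; auto. intros e [<-|He]; auto. Qed.

Lemma round_allsat E : forall x fl, (forall e, In e E -> val e (x (es e)) <= x (ed e)) -> round E (x, fl) = (x, fl).
Proof. induction E; intros x fl H; simpl; auto.
  destruct (Nat.ltb_spec (x (ed a)) (val a (x (es a)))).
  - specialize (H a (or_introl eq_refl)). lia.
  - apply IHE. intros; apply H; simpl; auto. Qed.

Lemma iterR_S E k : forall x, iterR E (S k) x = fst (round E (iterR E k x, false)).
Proof. induction k; intros x. reflexivity. change (iterR E (S (S k)) x) with (iterR E (S k) (fst (round E (x, false)))).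
  rewrite IHk. reflexivity. Qed.

Lemma rloop_S E k : forall x b, rloop E (S k) (x, b) = round E (iterR E k x, false).
Proof. induction k; intros x b. reflexivity.
  change (rloop E (S (S k)) (x, b)) with (rloop E (S k) (round E (x, false))).
  destruct (round E (x, false)) as [x' b'] eqn:Er. rewrite IHk. simpl. rewrite Er. reflexivity. Qed.

Definition solE E y := forall e, In e E -> sat e y.
Definition nodes_ok E Dd := forall e, In e E -> es e <= Dd /\ ed e <= Dd.

Lemma nat_min (Q : nat -> Prop) : (exists n, Q n) -> exists n, Q n /\ forall k, Q k -> n <= k.
Proof. intros [n Hn]. revert Hn. induction n as [n IH] using lt_wf_ind. intros Hn.
  destruct (classic (exists k, k < n /\ Q k)) as [[k [Hk Qk]]|Hno].
  - apply (IH k Hk Qk).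
  - exists n. split; auto. intros k Qk. destruct (le_lt_dec n k); auto. exfalso; apply Hno; eauto. Qed.

Definition mstar E (H : exists y, solE E y) (v : nat) : nat :=
  proj1_sig (constructive_indefinite_description _
    (nat_min (fun n => exists z, solE E z /\ z v = n)
      (let (y, Hy) := H in ex_intro _ (y v) (ex_intro _ y (conj Hy eq_refl))))).

Lemma mstar_spec E H v : (exists z, solE E z /\ z v = mstar E H v) /\ (forall z, solE E z -> mstar E H v <= z v).
Proof. unfold mstar. destruct (constructive_indefinite_description _ _) as [n [Hn Hmin]]. simpl.
  split; auto. intros z Hz. apply Hmin. eauto. Qed.

Lemma mstar_sol E H : solE E (mstar E H).
Proof. intros e He. apply sat_val. destruct (mstar_spec E H (ed e)) as [[z [Hz Hzv]] _].
  rewrite <- Hzv. pose proof (Hz e He) as S. apply sat_val in S. eapply Nat.le_trans; [|apply S].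
  apply val_mono. apply mstar_spec; auto. Qed.

Lemma closure E Dd H (R : nat -> Prop) : nodes_ok E Dd ->
  (forall v, v <= Dd -> mstar E H v = 0 -> R v) ->
  (forall e, In e E -> R (es e) -> val e (mstar E H (es e)) = mstar E H (ed e) -> R (ed e)) ->
  forall v, v <= Dd -> R v.
Proof. intros Hn H0 Hc v0 Hv0. destruct (classic (R v0)) as [|HR]; auto. exfalso.
  set (m := mstar E H).
  set (z := fun w => if excluded_middle_informative (R w) then m w else m w - 1).
  assert (Hz : solE E z).
  { intros e He. apply sat_val. destruct (Hn e He) as [Hu Hv].
    pose proof (mstar_sol E H e He) as S. apply sat_val in S. fold m in S.
    unfold z. destruct (excluded_middle_informative (R (ed e))) as [Rv|Rv];
    destruct (excluded_middle_informative (R (es e))) as [Ru|Ru].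
    - auto.
    - eapply Nat.le_trans; [|apply S]. apply val_mono; lia.
    - assert (val e (m (es e)) <> m (ed e)) by (intros E'; apply Rv; apply Hc; auto).
      assert (m (ed e) <> 0) by (intros E'; apply Rv; apply H0; auto). lia.
    - assert (m (ed e) <> 0) by (intros E'; apply Rv; apply H0; auto).
      assert (m (es e) <> 0) by (intros E'; apply Ru; apply H0; auto).
      unfold val in *; destruct (ep e); lia. }
  destruct (mstar_spec E H v0) as [_ Hmin]. specialize (Hmin z Hz). fold m in Hmin.
  unfold z in Hmin. destruct (excluded_middle_informative (R v0)); [contradiction|].
  assert (m v0 <> 0) by (intros E'; apply HR; apply H0; auto). lia. Qed.

Fixpoint reach E Dd H k v : Prop := match k with
  | 0 => v <= Dd /\ mstar E H v = 0
  | S k => reach E Dd H k v \/ exists e, In e E /\ ed e = v /\ reach E Dd H k (es e) /\ val e (mstar E H (es e)) = mstar E H v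
  end.

Lemma reach_le E Dd H k v : nodes_ok E Dd -> reach E Dd H k v -> v <= Dd.
Proof. intros Hn. induction k; simpl. tauto. intros [|[e [He [<- _]]]]; auto. apply Hn; auto. Qed.

Lemma reach_mono0 E Dd H k v : reach E Dd H 0 v -> reach E Dd H k v.
Proof. induction k; simpl; auto. Qed.

Lemma grow E Dd H : nodes_ok E Dd -> forall k, (forall v, v <= Dd -> reach E Dd H k v) \/
  exists L, NoDup L /\ length L = k + 1 /\ forall v, In v L -> reach E Dd H k v.
Proof. intros Hn. induction k.
  - right. destruct (classic (exists v, v <= Dd /\ mstar E H v = 0)) as [[v Hv]|Hno].
    + exists [v]. split. constructor; auto. constructor. split; auto. intros w [<-|[]]; simpl; auto.
    + exfalso. apply (closure E Dd H (fun _ => False) Hn) with (v := 0); try lia.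
      intros v Hv H0; apply Hno; eauto.
  - destruct IHk as [All|[L [HL1 [HL2 HL3]]]].
    + left. intros v Hv. simpl; auto.
    + destruct (classic (forall v, v <= Dd -> reach E Dd H (S k) v)) as [|Hnot]; [left; auto|right].
      destruct (classic (exists w, reach E Dd H (S k) w /\ ~ reach E Dd H k w)) as [[w [Hw1 Hw2]]|Hno].
      * exists (w :: L). split. { constructor; [|auto]. intros Hin; apply Hw2; auto. }
        split. simpl; lia. intros v [<-|Hv]; auto. simpl; auto.
      * exfalso. apply Hnot. intros v Hv. simpl. left.
        apply (closure E Dd H (reach E Dd H k) Hn); auto.
        -- intros u Hu Hu0. apply reach_mono0. simpl; auto.
        -- intros e He Hr Ht. destruct (classic (reach E Dd H k (ed e))) as [|Hc]; auto.
           exfalso. apply Hno. exists (ed e). split; auto. simpl. right. exists e. auto.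
Qed.

Lemma reach_all E Dd H : nodes_ok E Dd -> forall v, v <= Dd -> reach E Dd H (S Dd) v.
Proof. intros Hn. destruct (grow E Dd H Hn (S Dd)) as [|[L [HL1 [HL2 HL3]]]]; auto.
  exfalso. assert (incl L (seq 0 (S Dd))).
  { intros v Hv. apply in_seq. pose proof (reach_le E Dd H _ _ Hn (HL3 v Hv)). lia. }
  pose proof (NoDup_incl_length HL1 H0). rewrite length_seq in H1. lia. Qed.

Definition x0 : nat -> nat := fun _ => 0.

Lemma iter_upper E H k : forall v, iterR E k x0 v <= mstar E H v.
Proof. induction k; intros v. simpl; unfold x0; lia. rewrite iterR_S.
  apply (round_upper E (mstar E H)). apply mstar_sol. simpl. auto. Qed.

Lemma iter_lower E Dd H k : forall v, reach E Dd H k v -> mstar E H v <= iterR E k x0 v.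
Proof. induction k; intros v Hr. simpl in Hr. simpl. lia.
  rewrite iterR_S. destruct Hr as [Hr|[e [He [<- [Hr Ht]]]]].
  - eapply Nat.le_trans; [apply IHk; auto|]. apply (round_mono E (_, false)).
  - rewrite <- Ht. eapply Nat.le_trans; [|apply (round_edge E (iterR E k x0, false)); auto].
    apply val_mono. apply IHk; auto. Qed.

Theorem algo_correct E Dd b : nodes_ok E Dd ->
  (snd (rloop E (S (S Dd)) (x0, b)) = false <-> exists y, solE E y).
Proof. intros Hn. rewrite rloop_S. split.
  - intros Hf. apply round_noflag in Hf. destruct Hf as [_ [_ Hall]].
    exists (iterR E (S Dd) x0). intros e He. apply sat_val; auto.
  - intros H. rewrite round_allsat; auto. intros e He.
    destruct (Hn e He) as [Hu Hv].
    assert (Heq : forall v, v <= Dd -> iterR E (S Dd) x0 v = mstar E H v).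
    { intros v Hv'. apply Nat.le_antisymm. apply iter_upper. apply (iter_lower E Dd). apply reach_all; auto. }
    rewrite !Heq by auto. apply sat_val. apply mstar_sol; auto. Qed.

Fixpoint exec (P : program) (n : nat) (s : state) : option state :=
  match n with 0 => Some s | S n => match step P s with None => None | Some s' => exec P n s' end end.

Lemma exec_run P n : forall s s' t, exec P n s = Some s' -> step P s' = None -> n <= t -> run P t s = Some (snd s').
Proof. induction n; intros s s' t H1 H2 H3; simpl in H1.
  - inversion H1; subst. destruct t; simpl; rewrite H2; auto.
  - destruct (step P s) as [s1|] eqn:E; [|discriminate]. destruct t; [lia|].
    simpl. rewrite E. apply (IHn s1 s'); auto; lia. Qed.

Lemma exec_add P n1 : forall n2 s s1, exec P n1 s = Some s1 -> exec P (n1 + n2) s = exec P n2 s1.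
Proof. induction n1; intros n2 s s1 H; simpl in *. inversion H; auto.
  destruct (step P s); [|discriminate]. apply IHn1; auto. Qed.

Definition WP (P : program) (t : nat) (s : state) (Q : state -> Prop) : Prop :=
  exists n s', n <= t /\ exec P n s = Some s' /\ Q s'.

Lemma WP_mono P t t' s Q : t <= t' -> WP P t s Q -> WP P t' s Q.
Proof. intros H [n [s' [H1 [H2 H3]]]]. exists n, s'. split; [lia|auto]. Qed.

Lemma WP_ret P t s (Q : state -> Prop) : Q s -> WP P t s Q.
Proof. intros H. exists 0, s. split; [lia|split; auto]. Qed.

Lemma WP_step P t s s' Q : step P s = Some s' -> WP P t s' Q -> WP P (S t) s Q.
Proof. intros H [n [s'' [H1 [H2 H3]]]]. exists (S n), s''. split; [lia|]. simpl. rewrite H. auto. Qed.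

Lemma WP_const P t pc m Q r n : nth_error P pc = Some (IConst r n) ->
  (forall m', m' r = n -> (forall x, x <> r -> m' x = m x) -> WP P t (S pc, m') Q) -> WP P (S t) (pc, m) Q.
Proof. intros H K. apply (WP_step P t _ (S pc, upd m r n)). simpl; rewrite H; auto.
  apply K; unfold upd. rewrite Nat.eqb_refl; auto. intros x Hx. destruct (Nat.eqb_spec x r); tauto. Qed.

Lemma WP_add P t pc m Q r a b : nth_error P pc = Some (IAdd r a b) ->
  (forall m', m' r = m a + m b -> (forall x, x <> r -> m' x = m x) -> WP P t (S pc, m') Q) -> WP P (S t) (pc, m) Q.
Proof. intros H K. apply (WP_step P t _ (S pc, upd m r (m a + m b))). simpl; rewrite H; auto.
  apply K; unfold upd. rewrite Nat.eqb_refl; auto. intros x Hx. destruct (Nat.eqb_spec x r); tauto. Qed.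

Lemma WP_sub P t pc m Q r a b : nth_error P pc = Some (ISub r a b) ->
  (forall m', m' r = m a - m b -> (forall x, x <> r -> m' x = m x) -> WP P t (S pc, m') Q) -> WP P (S t) (pc, m) Q.
Proof. intros H K. apply (WP_step P t _ (S pc, upd m r (m a - m b))). simpl; rewrite H; auto.
  apply K; unfold upd. rewrite Nat.eqb_refl; auto. intros x Hx. destruct (Nat.eqb_spec x r); tauto. Qed.

Lemma WP_load P t pc m Q r a : nth_error P pc = Some (ILoad r a) ->
  (forall m', m' r = m (m a) -> (forall x, x <> r -> m' x = m x) -> WP P t (S pc, m') Q) -> WP P (S t) (pc, m) Q.
Proof. intros H K. apply (WP_step P t _ (S pc, upd m r (m (m a)))). simpl; rewrite H; auto.
  apply K; unfold upd. rewrite Nat.eqb_refl; auto. intros x Hx. destruct (Nat.eqb_spec x r); tauto. Qed.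

Lemma WP_store P t pc m Q a b : nth_error P pc = Some (IStore a b) ->
  (forall m', m' (m a) = m b -> (forall x, x <> m a -> m' x = m x) -> WP P t (S pc, m') Q) -> WP P (S t) (pc, m) Q.
Proof. intros H K. apply (WP_step P t _ (S pc, upd m (m a) (m b))). simpl; rewrite H; auto.
  apply K; unfold upd. rewrite Nat.eqb_refl; auto. intros x Hx. destruct (Nat.eqb_spec x (m a)); tauto. Qed.

Lemma WP_jz P t pc m Q a l : nth_error P pc = Some (IJz a l) ->
  (m a = 0 -> WP P t (l, m) Q) -> (m a <> 0 -> WP P t (S pc, m) Q) -> WP P (S t) (pc, m) Q.
Proof. intros H K1 K2. destruct (Nat.eqb_spec (m a) 0) as [E|E].
  - apply (WP_step P t _ (l, m)). simpl; rewrite H. rewrite E. auto. auto.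
  - apply (WP_step P t _ (S pc, m)). simpl; rewrite H. apply Nat.eqb_neq in E. rewrite E. auto. auto. Qed.

Lemma WP_jmp P t pc m Q l : nth_error P pc = Some (IJmp l) -> WP P t (l, m) Q -> WP P (S t) (pc, m) Q.
Proof. intros H K. apply (WP_step P t _ (l, m)). simpl; rewrite H; auto. auto. Qed.

Lemma WP_run P t m0 (R : memory -> Prop) :
  WP P t (0, m0) (fun s => nth_error P (fst s) = Some IHalt /\ R (snd s)) -> exists m, run P t (0, m0) = Some m /\ R m.
Proof. intros [n [[pc m] [H1 [H2 [H3 H4]]]]]. exists m. split; auto.
  apply (exec_run P n _ (pc, m)); auto. simpl in H3 |- *. rewrite H3. auto. Qed.

Definition code_at (P : program) (pc : nat) (l : list instr) : Prop :=
  firstn (length l) (skipn pc P) = l.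

Lemma code_at_nth P pc l k i : code_at P pc l -> nth_error l k = Some i -> nth_error P (k + pc) = Some i.
Proof. unfold code_at. intros H1 H2. rewrite <- H1 in H2.
  assert (k < length l) by (apply nth_error_Some; rewrite <- H1; congruence).
  rewrite nth_error_firstn in H2. destruct (Nat.ltb_spec k (length l)); [|lia].
  rewrite nth_error_skipn in H2. rewrite Nat.add_comm. auto. Qed.

Ltac nth Hc k := exact (code_at_nth _ _ _ k _ Hc eq_refl).

Ltac budget e := match goal with |- WP _ ?b _ _ => replace b with e by lia end.
Ltac dec n := match goal with |- WP _ ?b _ _ => replace b with (n + (b - n)) by lia end.

Definition relax_code pc (pos : bool) pu pv wr : list instr :=
  [ILoad 47 pu; (if pos then IAdd 47 47 wr else ISub 47 47 wr); ILoad 48 pv; ISub 49 47 48;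
   IJz 49 (7 + pc); IStore pv 47; IConst 46 1].

Lemma relax_spec P pc pos pu pv wr m t Q :
  code_at P pc (relax_code pc pos pu pv wr) ->
  wr <> 47 -> pv <> 47 -> pv <> 48 -> pv <> 49 -> m pv <> 46 -> m pv <> 47 -> m pv <> 48 -> m pv <> 49 ->
  (forall m', (forall r, r <> 46 -> r <> 47 -> r <> 48 -> r <> 49 -> r <> m pv -> m' r = m r) ->
     m' (m pv) = (if m (m pv) <? (if pos then m (m pu) + m wr else m (m pu) - m wr)
                  then (if pos then m (m pu) + m wr else m (m pu) - m wr) else m (m pv)) ->
     m' 46 = (if m (m pv) <? (if pos then m (m pu) + m wr else m (m pu) - m wr) then 1 else m 46) ->
     WP P t (7 + pc, m') Q) ->
  WP P (7 + t) (pc, m) Q.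
Proof. intros Hc H1 H2 H3 H3' H4 H5 H6 H7 K.
  set (vl := if pos then m (m pu) + m wr else m (m pu) - m wr) in *.
  apply (WP_load P _ _ _ _ 47 pu). nth Hc 0. intros m1 A1 B1.
  assert (Hv : forall r, r <> 47 -> m1 r = m r) by auto.
  destruct pos.
  - apply (WP_add P _ _ _ _ 47 47 wr). nth Hc 1. intros m2 A2 B2.
    assert (V2 : m2 47 = vl) by (rewrite A2, A1, B1; unfold vl; auto).
    clear A2 A1. revert V2. generalize dependent m2. intros m2 B2 V2.
    apply (WP_load P _ _ _ _ 48 pv). nth Hc 2. intros m3 A3 B3.
    assert (Pv2 : m2 pv = m pv) by (rewrite B2, B1; auto).
    assert (X3 : m3 48 = m (m pv)) by (rewrite A3, Pv2, B2, B1; auto).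
    apply (WP_sub P _ _ _ _ 49 47 48). nth Hc 3. intros m4 A4 B4.
    assert (D4 : m4 49 = vl - m (m pv)) by (rewrite A4, X3, B3, V2; auto).
    apply (WP_jz P _ _ _ _ 49 (7 + pc)). nth Hc 4.
    + intros Z. apply (WP_mono P t). lia. apply K.
      * intros r ? ? ? ? ?. rewrite B4, B3, B2, B1; (lia || auto).
      * destruct (Nat.ltb_spec (m (m pv)) vl). lia. rewrite B4, B3, B2, B1; (lia || auto).
      * destruct (Nat.ltb_spec (m (m pv)) vl). lia. rewrite B4, B3, B2, B1; (lia || auto).
    + intros NZ. apply (WP_store P _ _ _ _ pv 47). nth Hc 5. intros m5 A5 B5.
      apply (WP_const P _ _ _ _ 46 1). nth Hc 6. intros m6 A6 B6.
      assert (Pv : m4 pv = m pv) by (rewrite B4, B3, B2, B1; (lia || auto)).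
      apply K.
      * intros r ? ? ? ? ?. rewrite B6, B5, B4, B3, B2, B1; (lia || congruence).
      * destruct (Nat.ltb_spec (m (m pv)) vl); [|lia]. rewrite B6 by auto. rewrite <- Pv, A5, B4, B3, V2; (lia || auto).
      * destruct (Nat.ltb_spec (m (m pv)) vl); [|lia]. auto.
  - apply (WP_sub P _ _ _ _ 47 47 wr). nth Hc 1. intros m2 A2 B2.
    assert (V2 : m2 47 = vl) by (rewrite A2, A1, B1; unfold vl; auto).
    clear A2 A1. revert V2. generalize dependent m2. intros m2 B2 V2.
    apply (WP_load P _ _ _ _ 48 pv). nth Hc 2. intros m3 A3 B3.
    assert (Pv2 : m2 pv = m pv) by (rewrite B2, B1; auto).
    assert (X3 : m3 48 = m (m pv)) by (rewrite A3, Pv2, B2, B1; auto).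
    apply (WP_sub P _ _ _ _ 49 47 48). nth Hc 3. intros m4 A4 B4.
    assert (D4 : m4 49 = vl - m (m pv)) by (rewrite A4, X3, B3, V2; auto).
    apply (WP_jz P _ _ _ _ 49 (7 + pc)). nth Hc 4.
    + intros Z. apply (WP_mono P t). lia. apply K.
      * intros r ? ? ? ? ?. rewrite B4, B3, B2, B1; (lia || auto).
      * destruct (Nat.ltb_spec (m (m pv)) vl). lia. rewrite B4, B3, B2, B1; (lia || auto).
      * destruct (Nat.ltb_spec (m (m pv)) vl). lia. rewrite B4, B3, B2, B1; (lia || auto).
    + intros NZ. apply (WP_store P _ _ _ _ pv 47). nth Hc 5. intros m5 A5 B5.
      apply (WP_const P _ _ _ _ 46 1). nth Hc 6. intros m6 A6 B6.
      assert (Pv : m4 pv = m pv) by (rewrite B4, B3, B2, B1; (lia || auto)).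
      apply K.
      * intros r ? ? ? ? ?. rewrite B6, B5, B4, B3, B2, B1; (lia || congruence).
      * destruct (Nat.ltb_spec (m (m pv)) vl); [|lia]. rewrite B6 by auto. rewrite <- Pv, A5, B4, B3, V2; (lia || auto).
      * destruct (Nat.ltb_spec (m (m pv)) vl); [|lia]. auto.
Qed.

Definition Frame (M0 : memory) (XB : nat) (m : memory) : Prop :=
  forall a, a < XB -> ~ (40 <= a <= 49) -> m a = M0 a.
Definition Arr (Dd XB : nat) (m : memory) (X : nat -> nat) : Prop :=
  forall v, v <= Dd -> m (XB + v) = X v.

Lemma relax_abs P pc e pu pv wr M0 Dd XB m st t Q :
  code_at P pc (relax_code pc (ep e) pu pv wr) -> 100 <= XB ->
  Frame M0 XB m -> Arr Dd XB m (fst st) -> m 46 = Nat.b2n (snd st) ->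
  m pu = XB + es e -> m pv = XB + ed e -> m wr = ewt e -> es e <= Dd -> ed e <= Dd ->
  wr <> 47 -> pv <> 47 -> pv <> 48 -> pv <> 49 ->
  (forall m', Frame M0 XB m' -> Arr Dd XB m' (fst (relax st e)) ->
     m' 46 = Nat.b2n (snd (relax st e)) -> (forall r, 40 <= r <= 45 -> m' r = m r) ->
     WP P t (7 + pc, m') Q) ->
  WP P (7 + t) (pc, m) Q.
Proof. destruct st as [X fl]. simpl. intros Hc HXB HF HA Hfl Hpu Hpv Hwr Hu Hv H1 H2 H3 H4 K.
  apply (relax_spec P pc (ep e) pu pv wr m t Q Hc); auto; try (rewrite Hpv; lia).
  intros m' B A46 AF. rewrite Hpu, Hpv, Hwr in *. rewrite (HA _ Hu), (HA _ Hv) in *.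
  fold (val e (X (es e))) in *. simpl.
  unfold relax in K. simpl in K. revert A46 AF K. destruct (Nat.ltb_spec (X (ed e)) (val e (X (es e)))); intros A46 AF K; simpl in *.
  - apply K.
    + intros a Ha Hn. rewrite B by lia. apply HF; auto.
    + intros v Hv'. unfold upd. destruct (Nat.eqb_spec v (ed e)). subst; auto.
      rewrite B by lia. apply HA; auto.
    + congruence.
    + intros r Hr. apply B; lia.
  - apply K.
    + intros a Ha Hn. rewrite B by lia. apply HF; auto.
    + intros v Hv'. destruct (Nat.eq_dec v (ed e)). subst; auto.
      rewrite B by lia. apply HA; auto.
    + congruence.
    + intros r Hr. apply B; lia.
Qed.

Fixpoint gl (s1 s2 : nat) (pos : bool) (w : nat) (j k : nat) : list edge :=
  match k with 0 => [] | S k => mkE (j + s1) (j + s2) pos w :: gl s1 s2 pos w (S j) k end.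

Lemma loopA P L pos wr w s1 s2 M0 Dd XB :
  code_at P L [IJz 41 (12 + L)] -> code_at P (1 + L) (relax_code (1 + L) pos 42 43 wr) ->
  code_at P (8 + L) [IAdd 42 42 31; IAdd 43 43 31; ISub 41 41 31; IJmp L] ->
  100 <= XB -> M0 31 = 1 -> M0 wr = w -> wr < 40 ->
  forall k j st m t Q,
  Frame M0 XB m -> Arr Dd XB m (fst st) -> m 46 = Nat.b2n (snd st) ->
  m 41 = k -> m 42 = XB + j + s1 -> m 43 = XB + j + s2 ->
  (forall i, i < k -> j + i + s1 <= Dd /\ j + i + s2 <= Dd) ->
  (forall m', Frame M0 XB m' -> Arr Dd XB m' (fst (fold_left relax (gl s1 s2 pos w j k) st)) ->
     m' 46 = Nat.b2n (snd (fold_left relax (gl s1 s2 pos w j k) st)) -> m' 40 = m 40 ->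
     WP P t (12 + L, m') Q) ->
  WP P (k * 12 + 1 + t) (L, m) Q.
Proof. intros C1 C2 C3 HXB H31 Hw Hwr. induction k; intros j st m t Q HF HA Hfl Hk Hpu Hpv Hn K.
  - dec 1. apply (WP_jz P _ _ _ _ 41 (12 + L)). nth C1 0.
    + intros _. apply (WP_mono P t); [lia|]. apply K; auto.
    + intros; lia.
  - dec 1. apply (WP_jz P _ _ _ _ 41 (12 + L)). nth C1 0. intros; lia. intros _.
    destruct (Hn 0 ltac:(lia)) as [Hn1 Hn2].
    dec 7.
    apply (relax_abs P (1 + L) (mkE (j + s1) (j + s2) pos w) 42 43 wr M0 Dd XB m st); simpl; auto; try lia.
    + rewrite HF by lia. auto.
    + intros m1 HF1 HA1 Hfl1 HR1.
      dec 1. apply (WP_add P _ _ _ _ 42 42 31). nth C3 0. intros m2 A2 B2.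
      dec 1. apply (WP_add P _ _ _ _ 43 43 31). nth C3 1. intros m3 A3 B3.
      dec 1. apply (WP_sub P _ _ _ _ 41 41 31). nth C3 2. intros m4 A4 B4.
      dec 1. apply (WP_jmp P _ _ _ _ L). nth C3 3.
      apply (WP_mono P (k * 12 + 1 + t)); [lia|].
      assert (Q1 : m1 31 = 1) by (rewrite HF1 by lia; auto).
      assert (Q2 : m2 31 = 1) by (rewrite B2, HF1 by lia; auto).
      assert (Q3 : m3 31 = 1) by (rewrite B3, B2, HF1 by lia; auto).
      apply (IHk (S j) (relax st (mkE (j + s1) (j + s2) pos w))).
      * intros a Ha Hna. rewrite B4, B3, B2 by lia. auto.
      * intros v Hv. rewrite B4, B3, B2 by lia. auto.
      * rewrite B4, B3, B2 by lia. auto.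
      * rewrite A4, Q3, B3, B2, HR1 by lia. lia.
      * rewrite B4, B3, A2, Q1, HR1 by lia. lia.
      * rewrite B4, A3, Q2, B2, HR1 by lia. lia.
      * intros i Hi. specialize (Hn (S i) ltac:(lia)). lia.
      * intros m' HF' HA' Hfl' H40. apply K; auto.
        rewrite H40, B4, B3, B2, HR1 by lia. auto.
Qed.

Lemma Frame_upd M0 XB m m' r : Frame M0 XB m -> (forall x, x <> r -> m' x = m x) -> 40 <= r <= 49 -> Frame M0 XB m'.
Proof. intros HF B Hr a Ha Hn. rewrite B by lia. auto. Qed.
Lemma Arr_upd Dd XB m m' r X : Arr Dd XB m X -> (forall x, x <> r -> m' x = m x) -> r < XB -> Arr Dd XB m' X.
Proof. intros HA B Hr v Hv. rewrite B by lia. auto. Qed.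

Lemma loop1 P L I RL0 M0 XB :
  code_at P L [IJz 41 (23 + L); ILoad 45 44] ->
  code_at P (2 + L) (relax_code (2 + L) true 42 43 45) ->
  code_at P (9 + L) [IAdd 44 44 31; ILoad 45 44] ->
  code_at P (11 + L) (relax_code (11 + L) false 43 42 45) ->
  code_at P (18 + L) [IAdd 44 44 31; IAdd 42 42 31; IAdd 43 43 31; ISub 41 41 31; IJmp L] ->
  100 <= XB -> 100 <= RL0 -> RL0 + 2 * D I + 1 < XB -> M0 31 = 1 ->
  (forall d, 1 <= d <= D I -> M0 (RL0 + 2 * d) = r_l I d /\ M0 (RL0 + 2 * d + 1) = r_u I d) ->
  forall k d st m t Q,
  Frame M0 XB m -> Arr (D I) XB m (fst st) -> m 46 = Nat.b2n (snd st) ->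
  1 <= d -> d + k <= D I + 1 ->
  m 41 = k -> m 42 = XB + (d - 1) -> m 43 = XB + d -> m 44 = RL0 + 2 * d ->
  (forall m', Frame M0 XB m' -> Arr (D I) XB m' (fst (fold_left relax (e1 I d k) st)) ->
     m' 46 = Nat.b2n (snd (fold_left relax (e1 I d k) st)) -> m' 40 = m 40 ->
     WP P t (23 + L, m') Q) ->
  WP P (k * 23 + 1 + t) (L, m) Q.
Proof. intros C1 C2 C3 C4 C5 HXB HRL HRX H31 Hw.
  induction k; intros d st m t Q HF HA Hfl Hd1 Hdk Hk Hpu Hpv Hpl K.
  - dec 1. apply (WP_jz P _ _ _ _ 41 (23 + L)). nth C1 0.
    + intros _. apply (WP_mono P t); [lia|]. apply K; auto.
    + intros; lia.
  - dec 1. apply (WP_jz P _ _ _ _ 41 (23 + L)). nth C1 0. intros; lia. intros _.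
    destruct (Hw d ltac:(lia)) as [Wl Wu].
    dec 1. apply (WP_load P _ _ _ _ 45 44). nth C1 1. intros m1 A1 B1.
    assert (W1 : m1 45 = r_l I d) by (rewrite A1, Hpl, HF by lia; auto).
    dec 7. apply (relax_abs P (2 + L) (mkE (d - 1) d true (r_l I d)) 42 43 45 M0 (D I) XB m1 st); simpl; auto; try lia.
    + apply (Frame_upd M0 XB m m1 45); auto; lia.
    + apply (Arr_upd (D I) XB m m1 45); auto; lia.
    + rewrite B1 by lia; auto.
    + rewrite B1 by lia; auto.
    + rewrite B1 by lia; auto.
    + intros m2 HF2 HA2 Hfl2 HR2.
      dec 1. apply (WP_add P _ _ _ _ 44 44 31). nth C3 0. intros m3 A3 B3.
      assert (P3 : m3 44 = RL0 + 2 * d + 1).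
      { rewrite A3, HR2, B1, Hpl, (HF2 31) by lia. rewrite H31. lia. }
      dec 1. apply (WP_load P _ _ _ _ 45 44). nth C3 1. intros m4 A4 B4.
      assert (W4 : m4 45 = r_u I d) by (rewrite A4, P3, B3, HF2 by lia; auto).
      assert (HF3 : Frame M0 XB m3) by (apply (Frame_upd M0 XB m2 m3 44); auto; lia).
      assert (HF4 : Frame M0 XB m4) by (apply (Frame_upd M0 XB m3 m4 45); auto; lia).
      dec 7. apply (relax_abs P (11 + L) (mkE d (d - 1) false (r_u I d)) 43 42 45 M0 (D I) XB m4 (relax st (mkE (d - 1) d true (r_l I d)))); simpl; auto; try lia.
      * apply (Arr_upd (D I) XB m3 m4 45); auto; try lia. apply (Arr_upd (D I) XB m2 m3 44); auto; lia.
      * rewrite B4, B3 by lia; auto.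
      * rewrite B4, B3, HR2, B1 by lia; auto.
      * rewrite B4, B3, HR2, B1 by lia; auto.
      * intros m5 HF5 HA5 Hfl5 HR5.
        dec 1. apply (WP_add P _ _ _ _ 44 44 31). nth C5 0. intros m6 A6 B6.
        dec 1. apply (WP_add P _ _ _ _ 42 42 31). nth C5 1. intros m7 A7 B7.
        dec 1. apply (WP_add P _ _ _ _ 43 43 31). nth C5 2. intros m8 A8 B8.
        dec 1. apply (WP_sub P _ _ _ _ 41 41 31). nth C5 3. intros m9 A9 B9.
        dec 1. apply (WP_jmp P _ _ _ _ L). nth C5 4.
        apply (WP_mono P (k * 23 + 1 + t)); [lia|].
        assert (Q5 : m5 31 = 1) by (rewrite HF5 by lia; auto).
        assert (Q6 : m6 31 = 1) by (rewrite B6, HF5 by lia; auto).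
        assert (Q7 : m7 31 = 1) by (rewrite B7, B6, HF5 by lia; auto).
        assert (Q8 : m8 31 = 1) by (rewrite B8, B7, B6, HF5 by lia; auto).
        assert (R5 : forall r, 40 <= r <= 45 -> r <> 45 -> r <> 44 -> m5 r = m r).
        { intros r Hr H1 H2. rewrite HR5, B4, B3, HR2, B1 by lia. auto. }
        apply (IHk (S d) (relax (relax st (mkE (d - 1) d true (r_l I d))) (mkE d (d - 1) false (r_u I d)))).
        -- apply (Frame_upd M0 XB m8 m9 41); auto; try lia. apply (Frame_upd M0 XB m7 m8 43); auto; try lia.
           apply (Frame_upd M0 XB m6 m7 42); auto; try lia. apply (Frame_upd M0 XB m5 m6 44); auto; lia.
        -- apply (Arr_upd (D I) XB m8 m9 41); auto; try lia. apply (Arr_upd (D I) XB m7 m8 43); auto; try lia.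
           apply (Arr_upd (D I) XB m6 m7 42); auto; try lia. apply (Arr_upd (D I) XB m5 m6 44); auto; lia.
        -- rewrite B9, B8, B7, B6 by lia. auto.
        -- lia.
        -- lia.
        -- rewrite A9, Q8, B8, B7, B6, R5 by lia. lia.
        -- rewrite B9, B8, A7, Q6, B6, R5 by lia. simpl. lia.
        -- rewrite B9, A8, Q7, B7, B6, R5 by lia. lia.
        -- rewrite B9, B8, B7, A6, Q5, HR5, B4, P3 by lia. lia.
        -- intros m' HF' HA' Hfl' H40. apply K; auto.
           rewrite H40, B9, B8, B7, B6, R5 by lia. auto.
Qed.

Definition prog : program := [
  (* 0 *) IConst 2 1;
  (* 1 *) IAdd 8 0 0;
  (* 2 *) IConst 11 100;
  (* 3 *) IAdd 10 8 11;
  (* 4 *) IConst 11 12;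
  (* 5 *) IAdd 10 10 11;
  (* 6 *) IConst 9 12;
  (* 7 *) IJz 8 14;
  (* 8 *) ILoad 11 9;
  (* 9 *) IStore 10 11;
  (* 10 *) IAdd 9 9 2;
  (* 11 *) IAdd 10 10 2;
  (* 12 *) ISub 8 8 2;
  (* 13 *) IJmp 7;
  (* 14 *) IConst 32 0;
  (* 15 *) IConst 31 1;
  (* 16 *) IAdd 20 0 32;
  (* 17 *) IAdd 21 1 32;
  (* 18 *) IAdd 26 3 31;
  (* 19 *) IAdd 28 5 31;
  (* 20 *) ISub 25 0 3;
  (* 21 *) ISub 27 0 5;
  (* 22 *) IAdd 30 0 0;
  (* 23 *) IConst 34 112;
  (* 24 *) IAdd 30 30 34;
  (* 25 *) IAdd 29 30 30;
  (* 26 *) ISub 34 3 0;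
  (* 27 *) IJz 34 30;
  (* 28 *) IAdd 33 0 32;
  (* 29 *) IJmp 31;
  (* 30 *) IAdd 33 3 32;
  (* 31 *) IConst 22 0;
  (* 32 *) IJz 33 36;
  (* 33 *) IAdd 22 22 21;
  (* 34 *) ISub 33 33 31;
  (* 35 *) IJmp 32;
  (* 36 *) ISub 33 0 7;
  (* 37 *) IConst 23 0;
  (* 38 *) IJz 33 42;
  (* 39 *) IAdd 23 23 21;
  (* 40 *) ISub 33 33 31;
  (* 41 *) IJmp 38;
  (* 42 *) ISub 34 6 0;
  (* 43 *) IJz 34 46;
  (* 44 *) IAdd 33 0 32;
  (* 45 *) IJmp 47;
  (* 46 *) IAdd 33 6 32;
  (* 47 *) IConst 24 0;
  (* 48 *) IJz 33 52;
  (* 49 *) IAdd 24 24 21;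
  (* 50 *) ISub 33 33 31;
  (* 51 *) IJmp 48;
  (* 52 *) IAdd 40 20 31;
  (* 53 *) IAdd 40 40 31;
  (* 54 *) IConst 46 0;
  (* 55 *) IJz 40 132;
  (* 56 *) IConst 46 0;
  (* 57 *) IAdd 41 20 32;
  (* 58 *) IAdd 42 29 32;
  (* 59 *) IAdd 43 29 31;
  (* 60 *) IAdd 44 30 32;
  (* 61 *) IJz 41 84;
  (* 62 *) ILoad 45 44;
  (* 63 *) ILoad 47 42;
  (* 64 *) IAdd 47 47 45;
  (* 65 *) ILoad 48 43;
  (* 66 *) ISub 49 47 48;
  (* 67 *) IJz 49 70;
  (* 68 *) IStore 43 47;
  (* 69 *) IConst 46 1;
  (* 70 *) IAdd 44 44 31;
  (* 71 *) ILoad 45 44;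
  (* 72 *) ILoad 47 43;
  (* 73 *) ISub 47 47 45;
  (* 74 *) ILoad 48 42;
  (* 75 *) ISub 49 47 48;
  (* 76 *) IJz 49 79;
  (* 77 *) IStore 42 47;
  (* 78 *) IConst 46 1;
  (* 79 *) IAdd 44 44 31;
  (* 80 *) IAdd 42 42 31;
  (* 81 *) IAdd 43 43 31;
  (* 82 *) ISub 41 41 31;
  (* 83 *) IJmp 61;
  (* 84 *) IAdd 41 25 32;
  (* 85 *) IAdd 42 29 26;
  (* 86 *) IAdd 43 29 32;
  (* 87 *) IJz 41 99;
  (* 88 *) ILoad 47 42;
  (* 89 *) ISub 47 47 22;
  (* 90 *) ILoad 48 43;
  (* 91 *) ISub 49 47 48;
  (* 92 *) IJz 49 95;
  (* 93 *) IStore 43 47;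
  (* 94 *) IConst 46 1;
  (* 95 *) IAdd 42 42 31;
  (* 96 *) IAdd 43 43 31;
  (* 97 *) ISub 41 41 31;
  (* 98 *) IJmp 87;
  (* 99 *) IAdd 41 27 32;
  (* 100 *) IAdd 42 29 32;
  (* 101 *) IAdd 43 29 28;
  (* 102 *) IJz 41 114;
  (* 103 *) ILoad 47 42;
  (* 104 *) IAdd 47 47 21;
  (* 105 *) ILoad 48 43;
  (* 106 *) ISub 49 47 48;
  (* 107 *) IJz 49 110;
  (* 108 *) IStore 43 47;
  (* 109 *) IConst 46 1;
  (* 110 *) IAdd 42 42 31;
  (* 111 *) IAdd 43 43 31;
  (* 112 *) ISub 41 41 31;
  (* 113 *) IJmp 102;
  (* 114 *) IAdd 42 29 32;
  (* 115 *) IAdd 43 29 20;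
  (* 116 *) ILoad 47 42;
  (* 117 *) IAdd 47 47 23;
  (* 118 *) ILoad 48 43;
  (* 119 *) ISub 49 47 48;
  (* 120 *) IJz 49 123;
  (* 121 *) IStore 43 47;
  (* 122 *) IConst 46 1;
  (* 123 *) ILoad 47 43;
  (* 124 *) ISub 47 47 24;
  (* 125 *) ILoad 48 42;
  (* 126 *) ISub 49 47 48;
  (* 127 *) IJz 49 130;
  (* 128 *) IStore 42 47;
  (* 129 *) IConst 46 1;
  (* 130 *) ISub 40 40 31;
  (* 131 *) IJmp 55;
  (* 132 *) IJz 46 135;
  (* 133 *) IConst 0 0;
  (* 134 *) IHalt;
  (* 135 *) IConst 0 1;
  (* 136 *) IHalt].

Definition XBv I := 4 * D I + 224.

Definition Good I (M0 : memory) : Prop :=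
  M0 20 = D I /\ M0 21 = N I /\ M0 22 = NUW I /\ M0 23 = NA I /\ M0 24 = NB I /\
  M0 25 = CW I /\ M0 26 = SW I /\ M0 27 = CO I /\ M0 28 = SO I /\ M0 29 = XBv I /\
  M0 30 = 2 * D I + 112 /\ M0 31 = 1 /\ M0 32 = 0 /\
  (forall d, 1 <= d <= D I -> M0 (2 * D I + 110 + 2 * d) = r_l I d /\ M0 (2 * D I + 110 + 2 * d + 1) = r_u I d) /\
  (forall v, v <= D I -> M0 (XBv I + v) = 0).

Lemma gl_ewl I j k : gl (SW I) 0 false (NUW I) j k = ewl I j k.
Proof. revert j; induction k; intros j; simpl; auto. rewrite Nat.add_0_r, IHk. auto. Qed.
Lemma gl_eol I j k : gl 0 (SO I) true (N I) j k = eol I j k.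
Proof. revert j; induction k; intros j; simpl; auto. rewrite Nat.add_0_r, IHk. auto. Qed.

Definition RC I := D I * 23 + CW I * 12 + CO I * 12 + 33.

Lemma Good_reg I M0 m r : Good I M0 -> Frame M0 (XBv I) m -> 20 <= r <= 32 -> m r = M0 r.
Proof. intros HG HF Hr. apply HF. unfold XBv; lia. lia. Qed.

Lemma round_spec I M0 r (X : nat -> nat) m t Q : udodosp_instance I -> Good I M0 ->
  Frame M0 (XBv I) m -> Arr (D I) (XBv I) m (X) -> m 40 = S r ->
  (forall m', Frame M0 (XBv I) m' -> Arr (D I) (XBv I) m' (fst (round (edges I) (X, false))) ->
     m' 46 = Nat.b2n (snd (round (edges I) (X, false))) -> m' 40 = r -> WP prog t (55, m') Q) ->
  WP prog (RC I + t) (55, m) Q.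
Proof. intros HI HG HF HA H40 K.
  pose proof HG as (G20 & G21 & G22 & G23 & G24 & G25 & G26 & G27 & G28 & G29 & G30 & G31 & G32 & GW & GX).
  assert (HXB : 100 <= XBv I) by (unfold XBv; lia).
  assert (R : forall mm q, Frame M0 (XBv I) mm -> 20 <= q <= 32 -> mm q = M0 q) by (intros; apply (Good_reg I); auto).
  replace (RC I + t) with (1 + (1 + (1 + (1 + (1 + (1 + ((D I * 23 + 1) + (1 + (1 + (1 + ((CW I * 12 + 1) + (1 + (1 + (1 + ((CO I * 12 + 1) + (1 + (1 + (7 + (7 + (1 + (1 + t))))))))))))))))))))) by (unfold RC; lia).
  apply (WP_jz prog _ _ _ _ 40 132). reflexivity. intros; lia. intros _.
  apply (WP_const prog _ _ _ _ 46 0). reflexivity. intros m1 A1 B1.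
  assert (HF1 : Frame M0 (XBv I) m1) by (apply (Frame_upd _ _ m _ 46); auto; lia).
  apply (WP_add prog _ _ _ _ 41 20 32). reflexivity. intros m2 A2 B2.
  assert (HF2 : Frame M0 (XBv I) m2) by (apply (Frame_upd _ _ m1 _ 41); auto; lia).
  apply (WP_add prog _ _ _ _ 42 29 32). reflexivity. intros m3 A3 B3.
  assert (HF3 : Frame M0 (XBv I) m3) by (apply (Frame_upd _ _ m2 _ 42); auto; lia).
  apply (WP_add prog _ _ _ _ 43 29 31). reflexivity. intros m4 A4 B4.
  assert (HF4 : Frame M0 (XBv I) m4) by (apply (Frame_upd _ _ m3 _ 43); auto; lia).
  apply (WP_add prog _ _ _ _ 44 30 32). reflexivity. intros m5 A5 B5.
  assert (HF5 : Frame M0 (XBv I) m5) by (apply (Frame_upd _ _ m4 _ 44); auto; lia).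
  assert (HA5 : Arr (D I) (XBv I) m5 X).
  { apply (Arr_upd _ _ m4 _ 44); auto; try lia. apply (Arr_upd _ _ m3 _ 43); auto; try lia.
    apply (Arr_upd _ _ m2 _ 42); auto; try lia. apply (Arr_upd _ _ m1 _ 41); auto; try lia.
    apply (Arr_upd _ _ m _ 46); auto; try lia. }
  assert (E5 : m5 40 = m 40) by (rewrite B5, B4, B3, B2, B1 by lia; auto).
  assert (F5 : m5 46 = 0) by (rewrite B5, B4, B3, B2 by lia; auto).
  assert (K5 : m5 41 = D I) by (rewrite B5, B4, B3, A2, (R m1), (R m1), G20, G32 by (auto; lia); lia).
  assert (U5 : m5 42 = XBv I + (1 - 1)) by (rewrite B5, B4, A3, (R m2), (R m2), G29, G32 by (auto; lia); lia).
  assert (V5 : m5 43 = XBv I + 1) by (rewrite B5, A4, (R m3), (R m3), G29, G31 by (auto; lia); lia).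
  assert (L5 : m5 44 = 2 * D I + 110 + 2 * 1) by (rewrite A5, (R m4), (R m4), G30, G32 by (auto; lia); lia).
  apply (loop1 prog 61 I (2 * D I + 110) M0 (XBv I) ltac:(reflexivity) ltac:(reflexivity) ltac:(reflexivity) ltac:(reflexivity) ltac:(reflexivity)
    ltac:(unfold XBv; lia) ltac:(lia) ltac:(unfold XBv; lia) G31 GW (D I) 1 (X, false) m5); auto; try lia.
  intros m6 HF6 HA6 Hfl6 H6.
  set (st1 := fold_left relax (e1 I 1 (D I)) (X, false)) in *.
  apply (WP_add prog _ _ _ _ 41 25 32). reflexivity. intros m7 A7 B7.
  assert (HF7 : Frame M0 (XBv I) m7) by (apply (Frame_upd _ _ m6 _ 41); auto; lia).
  apply (WP_add prog _ _ _ _ 42 29 26). reflexivity. intros m8 A8 B8.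
  assert (HF8 : Frame M0 (XBv I) m8) by (apply (Frame_upd _ _ m7 _ 42); auto; lia).
  apply (WP_add prog _ _ _ _ 43 29 32). reflexivity. intros m9 A9 B9.
  assert (HF9 : Frame M0 (XBv I) m9) by (apply (Frame_upd _ _ m8 _ 43); auto; lia).
  assert (HA9 : Arr (D I) (XBv I) m9 (fst st1)).
  { apply (Arr_upd _ _ m8 _ 43); auto; try lia. apply (Arr_upd _ _ m7 _ 42); auto; try lia.
    apply (Arr_upd _ _ m6 _ 41); auto; try lia. }
  apply (loopA prog 87 false 22 (NUW I) (SW I) 0 M0 (D I) (XBv I) ltac:(reflexivity) ltac:(reflexivity) ltac:(reflexivity)
    HXB G31 G22 ltac:(lia) (CW I) 0 st1 m9); auto.
  { rewrite B9, B8, B7 by lia. auto. }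
  { rewrite B9, B8, A7, (R m6), (R m6), G25, G32 by (auto; lia). lia. }
  { rewrite B9, A8, (R m7), (R m7), G29, G26 by (auto; lia). lia. }
  { rewrite A9, (R m8), (R m8), G29, G32 by (auto; lia). lia. }
  { intros i Hi. unfold CW, SW in *. lia. }
  intros m10 HF10 HA10 Hfl10 H10.
  rewrite gl_ewl in HA10, Hfl10.
  set (st2 := fold_left relax (ewl I 0 (CW I)) st1) in *.
  apply (WP_add prog _ _ _ _ 41 27 32). reflexivity. intros m11 A11 B11.
  assert (HF11 : Frame M0 (XBv I) m11) by (apply (Frame_upd _ _ m10 _ 41); auto; lia).
  apply (WP_add prog _ _ _ _ 42 29 32). reflexivity. intros m12 A12 B12.
  assert (HF12 : Frame M0 (XBv I) m12) by (apply (Frame_upd _ _ m11 _ 42); auto; lia).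
  apply (WP_add prog _ _ _ _ 43 29 28). reflexivity. intros m13 A13 B13.
  assert (HF13 : Frame M0 (XBv I) m13) by (apply (Frame_upd _ _ m12 _ 43); auto; lia).
  assert (HA13 : Arr (D I) (XBv I) m13 (fst st2)).
  { apply (Arr_upd _ _ m12 _ 43); auto; try lia. apply (Arr_upd _ _ m11 _ 42); auto; try lia.
    apply (Arr_upd _ _ m10 _ 41); auto; try lia. }
  apply (loopA prog 102 true 21 (N I) 0 (SO I) M0 (D I) (XBv I) ltac:(reflexivity) ltac:(reflexivity) ltac:(reflexivity)
    HXB G31 G21 ltac:(lia) (CO I) 0 st2 m13); auto.
  { rewrite B13, B12, B11 by lia. auto. }
  { rewrite B13, B12, A11, (R m10), (R m10), G27, G32 by (auto; lia). lia. }
  { rewrite B13, A12, (R m11), (R m11), G29, G32 by (auto; lia). lia. }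
  { rewrite A13, (R m12), (R m12), G29, G28 by (auto; lia). lia. }
  { intros i Hi. unfold CO, SO in *. lia. }
  intros m14 HF14 HA14 Hfl14 H14.
  rewrite gl_eol in HA14, Hfl14.
  set (st3 := fold_left relax (eol I 0 (CO I)) st2) in *.
  apply (WP_add prog _ _ _ _ 42 29 32). reflexivity. intros m15 A15 B15.
  assert (HF15 : Frame M0 (XBv I) m15) by (apply (Frame_upd _ _ m14 _ 42); auto; lia).
  apply (WP_add prog _ _ _ _ 43 29 20). reflexivity. intros m16 A16 B16.
  assert (HF16 : Frame M0 (XBv I) m16) by (apply (Frame_upd _ _ m15 _ 43); auto; lia).
  assert (HA16 : Arr (D I) (XBv I) m16 (fst st3)).
  { apply (Arr_upd _ _ m15 _ 43); auto; try lia. apply (Arr_upd _ _ m14 _ 42); auto; try lia. }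
  apply (relax_abs prog 116 (mkE 0 (D I) true (NA I)) 42 43 23 M0 (D I) (XBv I) m16 st3); simpl; auto; try lia.
  { reflexivity. }
  { rewrite B16, B15 by lia. auto. }
  { rewrite B16, A15, (R m14), (R m14), G29, G32 by (auto; lia). lia. }
  { rewrite A16, (R m15), (R m15), G29, G20 by (auto; lia). lia. }
  { rewrite (R m16), G23 by (auto; lia). auto. }
  intros m17 HF17 HA17 Hfl17 H17.
  apply (relax_abs prog 123 (mkE (D I) 0 false (NB I)) 43 42 24 M0 (D I) (XBv I) m17 (relax st3 (mkE 0 (D I) true (NA I)))); simpl; auto; try lia.
  { reflexivity. }
  { rewrite H17, A16, (R m15), (R m15), G29, G20 by (auto; lia). lia. }
  { rewrite H17, B16, A15, (R m14), (R m14), G29, G32 by (auto; lia). lia. }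
  { rewrite (R m17), G24 by (auto; lia). auto. }
  intros m18 HF18 HA18 Hfl18 H18.
  apply (WP_sub prog _ _ _ _ 40 40 31). reflexivity. intros m19 A19 B19.
  apply (WP_jmp prog _ _ _ _ 55). reflexivity.
  assert (Hr : round (edges I) (X, false) = relax (relax st3 (mkE 0 (D I) true (NA I))) (mkE (D I) 0 false (NB I))).
  { unfold round, edges, st3, st2, st1. rewrite !fold_left_app. reflexivity. }
  rewrite Hr in K. apply K.
  - apply (Frame_upd _ _ m18 _ 40); auto; lia.
  - apply (Arr_upd _ _ m18 _ 40); auto; lia.
  - rewrite B19 by lia. auto.
  - rewrite A19, (R m18 31), G31 by (auto; lia). rewrite H18, H17 by lia.
    rewrite B16, B15, H14, B13, B12, B11, H10, B9, B8, B7, H6, E5, H40 by lia. lia.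
Qed.

Lemma rounds_spec I M0 : udodosp_instance I -> Good I M0 ->
  forall r st m t Q, Frame M0 (XBv I) m -> Arr (D I) (XBv I) m (fst st) -> m 46 = Nat.b2n (snd st) -> m 40 = r ->
  (forall m', Frame M0 (XBv I) m' -> Arr (D I) (XBv I) m' (fst (rloop (edges I) r st)) ->
     m' 46 = Nat.b2n (snd (rloop (edges I) r st)) -> WP prog t (132, m') Q) ->
  WP prog (r * RC I + 1 + t) (55, m) Q.
Proof. intros HI HG. induction r; intros st m t Q HF HA Hfl H40 K.
  - simpl. apply (WP_jz prog _ _ _ _ 40 132). reflexivity.
    + intros _. apply K; auto.
    + intros; lia.
  - replace (S r * RC I + 1 + t) with (RC I + (r * RC I + 1 + t)) by lia.
    apply (round_spec I M0 r (fst st) m); auto.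
    intros m' HF' HA' Hfl' H40'. apply (IHr (round (edges I) (fst st, false))); auto.
Qed.

Lemma nodes_edges I : nodes_ok (edges I) (D I).
Proof. intros e He. unfold edges in He.
  apply in_app_or in He as [He|He].
  { destruct (e1_inv _ _ _ _ He) as [d [Hd [-> | ->]]]; simpl; lia. }
  apply in_app_or in He as [He|He].
  { destruct (ewl_inv _ _ _ _ He) as [j [Hj ->]]; unfold SW, CW in *; simpl; lia. }
  apply in_app_or in He as [He|He].
  { destruct (eol_inv _ _ _ _ He) as [j [Hj ->]]; unfold SO, CO in *; simpl; lia. }
  simpl in He. destruct He as [<-|[<-|[]]]; simpl; lia.
Qed.

Definition Tmain I := 3 + ((D I + 2) * RC I + 1 + 2).

Lemma main_spec I M0 : udodosp_instance I -> Good I M0 ->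
  WP prog (Tmain I) (52, M0) (fun s => nth_error prog (fst s) = Some IHalt /\ (accepts (snd s) <-> feasible I)).
Proof. intros HI HG.
  pose proof HG as (G20 & G21 & G22 & G23 & G24 & G25 & G26 & G27 & G28 & G29 & G30 & G31 & G32 & GW & GX).
  unfold Tmain.
  apply (WP_add prog _ _ _ _ 40 20 31). reflexivity. intros m1 A1 B1.
  apply (WP_add prog _ _ _ _ 40 40 31). reflexivity. intros m2 A2 B2.
  apply (WP_const prog _ _ _ _ 46 0). reflexivity. intros m3 A3 B3.
  assert (HX : 100 <= XBv I) by (unfold XBv; lia).
  apply (rounds_spec I M0 HI HG (D I + 2) (x0, false) m3).
  - apply (Frame_upd _ _ m2 _ 46); auto; try lia. apply (Frame_upd _ _ m1 _ 40); auto; try lia.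
    apply (Frame_upd _ _ M0 _ 40); auto; try lia. intros a _ _; auto.
  - intros v Hv. rewrite B3, B2, B1 by (unfold XBv in *; lia). simpl. unfold x0. auto.
  - simpl. auto.
  - rewrite B3, A2, A1, (B1 31), G20, G31 by lia. lia.
  - intros m' HF' HA' Hfl'.
    assert (Hc := algo_correct (edges I) (D I) false (nodes_edges I)).
    replace (D I + 2) with (S (S (D I))) in Hfl' by lia.
    assert (Hiff : feasible I <-> snd (rloop (edges I) (S (S (D I))) (x0, false)) = false).
    { rewrite Hc, feasible_iff by auto. unfold sol, solE. tauto. }
    revert Hfl' Hiff. destruct (snd (rloop (edges I) (S (S (D I))) (x0, false))); simpl; intros Hfl' Hiff.
    + apply (WP_jz prog _ _ _ _ 46 135). reflexivity. intros; lia. intros _.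
      apply (WP_const prog _ _ _ _ 0 0). reflexivity. intros m4 A4 B4.
      apply WP_ret. simpl. split; auto. unfold accepts. rewrite A4. split; [tauto|]. intros H. apply Hiff in H. discriminate.
    + apply (WP_jz prog _ _ _ _ 46 135). reflexivity. 2:{ intros; lia. } intros _.
      apply (WP_const prog _ _ _ _ 0 1). reflexivity. intros m4 A4 B4.
      apply WP_ret. simpl. split; auto. unfold accepts. rewrite A4. split; intros; auto. apply Hiff; auto.
Qed.

Ltac chase := repeat (match goal with
 | A : ?m' ?r = _ |- context [?m' ?r] => rewrite A
 | B : forall x, x <> ?r -> ?m' x = ?m x |- context [?m' ?a] => rewrite (B a) by lia
 | B : forall x, x <> ?r1 -> x <> ?r2 -> ?m' x = ?m x |- context [?m' ?a] => rewrite (B a) by lia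
 end).

Lemma code_at_tail P p i l : code_at P p (i :: l) -> code_at P (1 + p) l.
Proof. unfold code_at. intros C. rewrite <- (skipn_skipn 1 p). destruct (skipn p P) as [|i' l']; [discriminate|].
  simpl in *. inversion C. rewrite H1. auto. Qed.

Lemma min_spec P p a m t Q : code_at P p [ISub 34 a 0; IJz 34 (4 + p); IAdd 33 0 32; IJmp (5 + p); IAdd 33 a 32] ->
  a <> 33 -> a <> 34 -> m 32 = 0 ->
  (forall m', m' 33 = Nat.min (m a) (m 0) -> (forall x, x <> 33 -> x <> 34 -> m' x = m x) -> WP P t (5 + p, m') Q) ->
  WP P (4 + t) (p, m) Q.
Proof. intros C Ha1 Ha2 H32 K.
  apply (WP_sub P _ _ _ _ 34 a 0). nth C 0. intros m1 A1 B1.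
  apply (WP_jz P _ _ _ _ 34 (4 + p)). nth C 1.
  - intros Z. apply (WP_add P _ _ _ _ 33 a 32). nth C 4. intros m2 A2 B2.
    apply (WP_mono P t); [lia|]. apply K.
    + rewrite A2, !B1 by lia. rewrite H32. lia.
    + intros x H1 H2. rewrite B2, B1 by lia. auto.
  - intros NZ. apply (WP_add P _ _ _ _ 33 0 32). nth C 2. intros m2 A2 B2.
    apply (WP_jmp P _ _ _ _ (5 + p)). nth C 3. apply K.
    + rewrite A2, !B1 by lia. rewrite H32. lia.
    + intros x H1 H2. rewrite B2, B1 by lia. auto.
Qed.

Lemma mul_loop P p out : code_at P (1 + p) [IJz 33 (5 + p); IAdd out out 21; ISub 33 33 31; IJmp (1 + p)] ->
  out <> 33 -> out <> 21 -> out <> 31 ->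
  forall k m acc t Q, m 33 = k -> m out = acc -> m 31 = 1 ->
  (forall m', m' out = acc + k * m 21 -> m' 33 = 0 -> (forall x, x <> 33 -> x <> out -> m' x = m x) -> WP P t (5 + p, m') Q) ->
  WP P (k * 4 + 1 + t) (1 + p, m) Q.
Proof. intros C H1 H2 H3. induction k; intros m acc t Q Hk Hacc H31 K.
  - replace (0 * 4 + 1 + t) with (1 + t) by lia. apply (WP_jz P _ _ _ _ 33 (5 + p)). nth C 0.
    + intros _. apply K; auto. lia.
    + intros; lia.
  - replace (S k * 4 + 1 + t) with (1 + (1 + (1 + (1 + (k * 4 + 1 + t))))) by lia.
    apply (WP_jz P _ _ _ _ 33 (5 + p)). nth C 0. intros; lia. intros _.
    apply (WP_add P _ _ _ _ out out 21). nth C 1. intros m1 A1 B1.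
    apply (WP_sub P _ _ _ _ 33 33 31). nth C 2. intros m2 A2 B2.
    apply (WP_jmp P _ _ _ _ (1 + p)). nth C 3.
    apply (IHk m2 (acc + m 21)).
    + rewrite A2, (B1 33), (B1 31) by lia. lia.
    + rewrite B2, A1 by lia. lia.
    + rewrite B2, B1 by lia. auto.
    + intros m' A' Z' B'. apply K; auto.
      * rewrite A'. rewrite B2, B1 by lia. lia.
      * intros x Hx1 Hx2. rewrite B', B2, B1 by lia. auto.
Qed.

Lemma mul_spec P p out m t Q : code_at P p [IConst out 0; IJz 33 (5 + p); IAdd out out 21; ISub 33 33 31; IJmp (1 + p)] ->
  out <> 33 -> out <> 21 -> out <> 31 -> m 31 = 1 ->
  (forall m', m' out = m 33 * m 21 -> (forall x, x <> 33 -> x <> out -> m' x = m x) -> WP P t (5 + p, m') Q) ->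
  WP P (1 + (m 33 * 4 + 1 + t)) (p, m) Q.
Proof. intros C H1 H2 H3 H31 K.
  assert (C' : code_at P (1 + p) [IJz 33 (5 + p); IAdd out out 21; ISub 33 33 31; IJmp (1 + p)]).
  { apply code_at_tail in C. exact C. }
  apply (WP_const P _ _ _ _ out 0). nth C 0. intros m1 A1 B1.
  apply (mul_loop P p out C' H1 H2 H3 (m 33) m1 0); auto.
  - rewrite B1 by lia; auto.
  - intros m' A' Z' B'. apply K.
    + rewrite A', (B1 21) by lia. lia.
    + intros x Hx1 Hx2. rewrite B', B1 by lia. auto.
Qed.

Lemma init_hi I x : 8 <= x -> init_mem I x =
  (if (12 <=? x) && (x <=? 11 + 2 * D I) then (if Nat.even x then r_l I ((x - 10) / 2) else r_u I ((x - 11) / 2)) else 0).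
Proof. intros H. do 8 (destruct x; [lia|]). reflexivity. Qed.

Lemma init_zero I x : 11 + 2 * D I < x -> init_mem I x = 0.
Proof. intros H. rewrite init_hi by lia. destruct (Nat.leb_spec (12) x); destruct (Nat.leb_spec x (11 + 2 * D I)); simpl; auto; lia. Qed.

Definition CopyInv I i (m : memory) : Prop :=
  m 8 = 2 * D I - i /\ m 9 = 12 + i /\ m 10 = 2 * D I + 112 + i /\ m 2 = 1 /\
  (forall a, a < 2 * D I + 112 -> a <> 2 -> a <> 8 -> a <> 9 -> a <> 10 -> a <> 11 -> m a = init_mem I a) /\
  (forall j, j < i -> m (2 * D I + 112 + j) = init_mem I (12 + j)) /\
  (forall a, 2 * D I + 112 + i <= a -> m a = init_mem I a).

Lemma copy_loop I : forall c i m t Q, c + i = 2 * D I -> CopyInv I i m ->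
  (forall m', CopyInv I (2 * D I) m' -> WP prog t (14, m') Q) -> WP prog (c * 7 + 1 + t) (7, m) Q.
Proof. induction c; intros i m t Q Hc (H8 & H9 & H10 & H2 & Ha & Hb & Hcc) K.
  - simpl. apply (WP_jz prog _ _ _ _ 8 14). reflexivity.
    + intros _. apply K. replace (2 * D I) with i by lia. repeat split; auto.
    + intros; lia.
  - replace (S c * 7 + 1 + t) with (1 + (1 + (1 + (1 + (1 + (1 + (1 + (c * 7 + 1 + t)))))))) by lia.
    apply (WP_jz prog _ _ _ _ 8 14). reflexivity. intros; lia. intros _.
    apply (WP_load prog _ _ _ _ 11 9). reflexivity. intros m1 A1 B1.
    apply (WP_store prog _ _ _ _ 10 11). reflexivity. intros m2 A2 B2.
    apply (WP_add prog _ _ _ _ 9 9 2). reflexivity. intros m3 A3 B3.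
    apply (WP_add prog _ _ _ _ 10 10 2). reflexivity. intros m4 A4 B4.
    apply (WP_sub prog _ _ _ _ 8 8 2). reflexivity. intros m5 A5 B5.
    apply (WP_jmp prog _ _ _ _ 7). reflexivity.
    assert (E10 : m1 10 = 2 * D I + 112 + i) by (rewrite B1 by lia; auto).
    rewrite E10 in A2, B2.
    assert (V : m1 11 = init_mem I (12 + i)) by (rewrite A1, H9; apply Ha; lia).
    apply (IHc (S i) m5); [lia| |auto].
    repeat split.
    + chase. lia.
    + chase. lia.
    + chase. lia.
    + chase. auto.
    + intros a Ha1 Ha2 Ha3 Ha4 Ha5 Ha6. chase. apply Ha; auto.
    + intros j Hj. destruct (Nat.eq_dec j i).
      * subst. rewrite B5, B4, B3 by lia. rewrite A2. auto.
      * chase. apply Hb; lia.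
    + intros a Ha1. chase. apply Hcc; lia.
Qed.

Lemma phaseA I t Q : udodosp_instance I ->
  (forall m', CopyInv I (2 * D I) m' -> WP prog t (14, m') Q) -> WP prog (7 + ((2 * D I) * 7 + 1 + t)) (0, init_mem I) Q.
Proof. intros HI K.
  apply (WP_const prog _ _ _ _ 2 1). reflexivity. intros m1 A1 B1.
  apply (WP_add prog _ _ _ _ 8 0 0). reflexivity. intros m2 A2 B2.
  apply (WP_const prog _ _ _ _ 11 100). reflexivity. intros m3 A3 B3.
  apply (WP_add prog _ _ _ _ 10 8 11). reflexivity. intros m4 A4 B4.
  apply (WP_const prog _ _ _ _ 11 12). reflexivity. intros m5 A5 B5.
  apply (WP_add prog _ _ _ _ 10 10 11). reflexivity. intros m6 A6 B6.
  apply (WP_const prog _ _ _ _ 9 12). reflexivity. intros m7 A7 B7.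
  apply (copy_loop I (2 * D I) 0 m7); [lia| |auto].
  repeat split.
  - chase. simpl. lia.
  - chase. lia.
  - chase. simpl. lia.
  - chase. auto.
  - intros a Ha1 Ha2 Ha3 Ha4 Ha5 Ha6. chase. auto.
  - intros j Hj. lia.
  - intros a Ha. chase. auto.
Qed.

Lemma even_fact d : Nat.even (10 + 2 * d) = true /\ (10 + 2 * d - 10) / 2 = d /\ Nat.even (11 + 2 * d) = false /\ (11 + 2 * d - 11) / 2 = d.
Proof. replace (10 + 2 * d) with (2 * (5 + d)) by lia. replace (11 + 2 * d) with (1 + 2 * (5 + d)) by lia.
  rewrite Nat.even_mul, Nat.even_add_mul_2.
  replace (2 * (5 + d) - 10) with (d * 2) by lia. replace (1 + 2 * (5 + d) - 11) with (d * 2) by lia.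
  rewrite Nat.div_mul by lia. auto. Qed.

Lemma phaseB I mA t Q : udodosp_instance I -> CopyInv I (2 * D I) mA ->
  (forall M0, Good I M0 -> WP prog t (52, M0) Q) -> WP prog (12 * D I + 60 + t) (14, mA) Q.
Proof. intros HI (H8 & H9 & H10 & H2 & Ha & Hb & Hc) K.
  assert (I0 : mA 0 = D I) by (rewrite Ha by lia; auto).
  assert (I1 : mA 1 = N I) by (rewrite Ha by lia; auto).
  assert (I3 : mA 3 = u_w I) by (rewrite Ha by lia; auto).
  assert (I5 : mA 5 = u_o I) by (rewrite Ha by lia; auto).
  assert (I6 : mA 6 = U_w I) by (rewrite Ha by lia; auto).
  assert (I7 : mA 7 = U_o I) by (rewrite Ha by lia; auto).
  clear H8 H9 H10 H2.
  apply (WP_mono prog (1 + (1 + (1 + (1 + (1 + (1 + (1 + (1 + (1 + (1 + (1 + (1 + (4 + (1 + (D I * 4 + 1 + (1 + (1 + (D I * 4 + 1 + (4 + (1 + (D I * 4 + 1 + t)))))))))))))))))))))); [lia|].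
  apply (WP_const prog _ _ _ _ 32 0). reflexivity. intros m1 A1 B1.
  apply (WP_const prog _ _ _ _ 31 1). reflexivity. intros m2 A2 B2.
  apply (WP_add prog _ _ _ _ 20 0 32). reflexivity. intros m3 A3 B3.
  apply (WP_add prog _ _ _ _ 21 1 32). reflexivity. intros m4 A4 B4.
  apply (WP_add prog _ _ _ _ 26 3 31). reflexivity. intros m5 A5 B5.
  apply (WP_add prog _ _ _ _ 28 5 31). reflexivity. intros m6 A6 B6.
  apply (WP_sub prog _ _ _ _ 25 0 3). reflexivity. intros m7 A7 B7.
  apply (WP_sub prog _ _ _ _ 27 0 5). reflexivity. intros m8 A8 B8.
  apply (WP_add prog _ _ _ _ 30 0 0). reflexivity. intros m9 A9 B9.
  apply (WP_const prog _ _ _ _ 34 112). reflexivity. intros m10 A10 B10.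
  apply (WP_add prog _ _ _ _ 30 30 34). reflexivity. intros m11 A11 B11.
  apply (WP_add prog _ _ _ _ 29 30 30). reflexivity. intros m12 A12 B12.
  apply (min_spec prog 26 3 m12). reflexivity. lia. lia. chase; auto.
  intros m13 A13 B13.
  assert (M13 : m13 33 <= D I) by (rewrite A13; chase; lia).
  apply (WP_mono prog (1 + (m13 33 * 4 + 1 + (1 + (1 + (D I * 4 + 1 + (4 + (1 + (D I * 4 + 1 + t))))))))); [lia|].
  apply (mul_spec prog 31 22 m13). reflexivity. lia. lia. lia. chase; auto.
  intros m14 A14 B14.
  apply (WP_sub prog _ _ _ _ 33 0 7). reflexivity. intros m15 A15 B15.
  assert (M15 : m15 33 <= D I) by (chase; lia).
  apply (WP_mono prog (1 + (m15 33 * 4 + 1 + (4 + (1 + (D I * 4 + 1 + t)))))); [lia|].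
  apply (mul_spec prog 37 23 m15). reflexivity. lia. lia. lia. chase; auto.
  intros m16 A16 B16.
  apply (min_spec prog 42 6 m16). reflexivity. lia. lia. chase; auto.
  intros m17 A17 B17.
  assert (M17 : m17 33 <= D I) by (rewrite A17; chase; lia).
  apply (WP_mono prog (1 + (m17 33 * 4 + 1 + t))); [lia|].
  apply (mul_spec prog 47 24 m17). reflexivity. lia. lia. lia. chase; auto.
  intros m18 A18 B18.
  apply K. unfold Good, NUW, NA, NB, CW, SW, CO, SO, XBv.
  split; [chase; lia|]. split; [chase; lia|]. split; [chase; lia|]. split; [chase; lia|].
  split; [chase; lia|]. split; [chase; lia|]. split; [chase; lia|]. split; [chase; lia|].
  split; [chase; lia|]. split; [chase; lia|]. split; [chase; lia|]. split; [chase; lia|].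
  split; [chase; lia|]. split.
  - intros d Hd. destruct (even_fact d) as (E1 & E2 & E3 & E4). chase.
    replace (2 * D I + 110 + 2 * d) with (2 * D I + 112 + (2 * d - 2)) by lia.
    replace (2 * D I + 112 + (2 * d - 2) + 1) with (2 * D I + 112 + (2 * d - 1)) by lia.
    rewrite !Hb by lia. replace (12 + (2 * d - 2)) with (10 + 2 * d) by lia.
    replace (12 + (2 * d - 1)) with (11 + 2 * d) by lia.
    rewrite !init_hi by lia. rewrite E1, E2, E3, E4.
    destruct (Nat.leb_spec 12 (10 + 2 * d)); destruct (Nat.leb_spec (10 + 2 * d) (11 + 2 * D I));
    destruct (Nat.leb_spec 12 (11 + 2 * d)); destruct (Nat.leb_spec (11 + 2 * d) (11 + 2 * D I)); simpl; try lia; auto.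
  - intros v Hv. chase. rewrite Hc by lia. apply init_zero. lia.
Qed.

Theorem theorem4p1 :
  exists (P : program) (c : nat),
    forall I : dodosp_instance, udodosp_instance I ->
      exists m : memory,
        run P (c * (D I * D I)) (0, init_mem I) = Some m /\
        (accepts m <-> feasible I).
Proof.
  exists prog, 400. intros I HI. apply WP_run.
  assert (HD : 1 <= D I) by (destruct HI as [[? _] _]; auto).
  assert (HR : RC I <= 47 * D I + 33) by (unfold RC, CW, CO; lia).
  apply (WP_mono prog (7 + ((2 * D I) * 7 + 1 + (12 * D I + 60 + Tmain I)))).
  { unfold Tmain. nia. }
  apply phaseA; auto. intros mA HA.
  apply phaseB; auto. intros M0 HG.
  apply main_spec; auto.
Qed.
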